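(* Fix $n\ge 2$, a weight $q\in\{1,\dots,n\}$, a constant $c\in(0,1/2)$, and a sequence of integers $\{p_r\}_{r\ge n}$ with $0\le p_r\le r-n$ and $c\le p_r/r\le 1-c$ for all $r$. Then for almost every $x\in\Omega$, \[ \lim_{r\to\infty}\frac{k_{p_r,q}(x;r)}{\binom{r-n}{p_r}\,\mu(r,p_r)} = 1. \]
   Context: Fix an integer $n\ge 2$. For an integer $r\ge n$ write $[r]=\{1,\dots,r\}$ and $\binom{[r]}{n-1}$ for the set of $(n-1)$-element subsets of $[r]$; elements are written $I=\{i_1<\dots<i_{n-1}\}$. A Betti table is an array of real numbers $k_{p,q}$ with columns $p=0,\dots,r-n$ and rows $q=1,\dots,n$. For $I\in\binom{[r]}{n-1}$ write $[r]\setminus I=\{d_0<d_1<\dots<d_{r-n}\}$; the pure diagram $\pi(r,I)$ is the Betti table with $k_{p,q}(\pi(r,I))=0$ if $q\neq d_p-p$, and $k_{p,d_p-p}(\pi(r,I)) = (r-n)!\cdot\prod_{0\le \ell\le r-n,\ \ell\neq p}\frac{1}{|d_\ell-d_p|}$. Let $\binom{[\infty]}{n-1}$ be the set of all $(n-1)$-element subsets of $\mathbb{Z}_{>0}$, and let $\Omega=[0,1]^{\binom{[\infty]}{n-1}}$ carry the product probability measure of the uniform (Lebesgue) measures on the factors. For $x=(x_I)\in\Omega$ and $r\ge n$ set $k_{p,q}(x;r)=\sum_{I\in\binom{[r]}{n-1}} x_I\,k_{p,q}(\pi(r,I))$. For fixed $n$ and $q\in[1,n]$ put \[ \mu(r,p)=\frac{1}{2^n}\cdot\frac{p^{q-1}(r-p-n)^{n-q}}{(q-1)!\,(n-q)!}.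 \] *)

(* Defs.v *)
From Stdlib Require Import Reals Lra Lia Arith List Sorted.
Import ListNotations.
Open Scope R_scope.

(* k-element sublists of l, preserving order; with l = [1..r] these are the
   k-subsets of [r], each written as a strictly increasing list. *)
Fixpoint combs (k : nat) (l : list nat) : list (list nat) :=
  match k, l with
  | O, _ => [ [] ]
  | S _, [] => []
  | S k', a :: l' => map (cons a) (combs k' l') ++ combs k l'
  end.

(* [r] \ I, listed increasingly: d_0 < d_1 < ... < d_{r-n} *)
Definition compl (r : nat) (I : list nat) : list nat :=
  filter (fun j => negb (existsb (Nat.eqb j) I)) (seq 1 r).

Definition pure_entry (n r : nat) (I : list nat) (p q : nat) : R :=
  let d := compl r I in
  let dp := nth p d 0%nat in
  if Nat.eqb q (dp - p)%nat then
    INR (fact (r - n)) *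
    fold_right Rmult 1
      (map (fun l => / Rabs (INR (nth l d 0%nat) - INR dp))
           (filter (fun l => negb (Nat.eqb l p)) (seq 0 (r - n + 1))))
  else 0.

(* A point of Omega is modelled as x : list nat -> R; only the values at
   valid indices (strictly increasing lists of n-1 positive integers,
   i.e. (n-1)-subsets of Z_{>0}) matter. *)
Definition valid_index (n : nat) (I : list nat) : Prop :=
  length I = (n - 1)%nat /\ Sorted lt I /\ Forall (fun i => (0 < i)%nat) I.

Definition kpq (n : nat) (x : list nat -> R) (r p q : nat) : R :=
  fold_right Rplus 0
    (map (fun I => x I * pure_entry n r I p q) (combs (n - 1) (seq 1 r))).

Definition mu (n q r p : nat) : R :=
  / (2 ^ n) * ((INR p ^ (q - 1) * INR (r - p - n) ^ (n - q))
               / (INR (fact (q - 1)) * INR (fact (n - q)))).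

(* A cylinder box: finitely many distinct valid coordinates I, each
   constrained to an interval [a,b] subset of [0,1]. *)
Definition box := list (list nat * R * R).

Definition box_wf (n : nat) (B : box) : Prop :=
  Forall (fun t => valid_index n (fst (fst t)) /\
                   0 <= snd (fst t) <= snd t /\ snd t <= 1) B
  /\ NoDup (map (fun t => fst (fst t)) B).

Definition box_meas (B : box) : R :=
  fold_right Rmult 1 (map (fun t => snd t - snd (fst t)) B).

Definition in_box (x : list nat -> R) (B : box) : Prop :=
  Forall (fun t => snd (fst t) <= x (fst (fst t)) <= snd t) B.

Definition in_Omega (n : nat) (x : list nat -> R) : Prop :=
  forall I, valid_index n I -> 0 <= x I <= 1.

(* N is null for the product of Lebesgue measures: for every eps > 0 its
   points in Omega are covered by countably many cylinder boxes of total
   measure <= eps (outer measure zero). *)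
Definition null_set (n : nat) (N : (list nat -> R) -> Prop) : Prop :=
  forall eps, eps > 0 ->
    exists Bs : nat -> box,
      (forall k, box_wf n (Bs k)) /\
      (forall m, sum_f_R0 (fun k => box_meas (Bs k)) m <= eps) /\
      (forall x, in_Omega n x -> N x -> exists k, in_box x (Bs k)).

Definition almost_every (n : nat) (P : (list nat -> R) -> Prop) : Prop :=
  null_set n (fun x => ~ P x).

(* Main.v *)
Require Import Defs.
From Stdlib Require Import Reals.
From Stdlib Require Import Lra Lia Arith List Sorted Permutation ZArith Classical.
Import ListNotations.
Open Scope R_scope.

Definition sumR (l : list R) : R := fold_right Rplus 0 l.
Definition prodR (l : list R) : R := fold_right Rmult 1 l.

Lemma sumR_app l1 l2 : sumR (l1 ++ l2) = sumR l1 + sumR l2.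
Proof. induction l1; simpl; [lra|]. unfold sumR in *; simpl; rewrite IHl1; lra. Qed.
Lemma prodR_app l1 l2 : prodR (l1 ++ l2) = prodR l1 * prodR l2.
Proof. induction l1; simpl; [lra|]. unfold prodR in *; simpl; rewrite IHl1; lra. Qed.
Lemma sumR_perm l1 l2 : Permutation l1 l2 -> sumR l1 = sumR l2.
Proof. induction 1; unfold sumR in *; simpl; lra. Qed.
Lemma prodR_perm l1 l2 : Permutation l1 l2 -> prodR l1 = prodR l2.
Proof. induction 1; unfold prodR in *; simpl; try rewrite IHPermutation; try lra. Qed.
Lemma sumR_map_scal {A} (f : A -> R) a l : sumR (map (fun x => a * f x) l) = a * sumR (map f l).
Proof. induction l; unfold sumR in *; simpl; [lra|]. rewrite IHl; lra. Qed.
Lemma sumR_map_plus {A} (f g : A -> R) l : sumR (map (fun x => f x + g x) l) = sumR (map f l) + sumR (map g l).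
Proof. induction l; unfold sumR in *; simpl; [lra|]. rewrite IHl; lra. Qed.
Lemma sumR_map_ext {A} (f g : A -> R) l : (forall x, In x l -> f x = g x) -> sumR (map f l) = sumR (map g l).
Proof. intros H; induction l; unfold sumR in *; simpl; auto. rewrite H, IHl; simpl; auto. intros; apply H; simpl; auto. Qed.
Lemma sumR_map_le {A} (f g : A -> R) l : (forall x, In x l -> f x <= g x) -> sumR (map f l) <= sumR (map g l).
Proof. intros H; induction l; unfold sumR in *; simpl; [lra|]. pose proof (H a (or_introl eq_refl)).
 assert (fold_right Rplus 0 (map f l) <= fold_right Rplus 0 (map g l)) by (apply IHl; intros; apply H; simpl; auto). lra. Qed.
Lemma sumR_nonneg l : Forall (fun x => 0 <= x) l -> 0 <= sumR l.
Proof. induction 1; unfold sumR in *; simpl; lra. Qed.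
Lemma prodR_nonneg l : Forall (fun x => 0 <= x) l -> 0 <= prodR l.
Proof. induction 1; unfold prodR in *; simpl; [lra|]. apply Rmult_le_pos; auto. Qed.

Lemma sumR_const {A} (l : list A) a : sumR (map (fun _ => a) l) = INR (length l) * a.
Proof. induction l; [unfold sumR; simpl; lra|]. change (sumR (map (fun _ => a) (a0 :: l))) with (a + sumR (map (fun _ => a) l)). rewrite IHl. change (length (a0 :: l)) with (S (length l)). rewrite S_INR. ring. Qed.

Fixpoint esym (l : list R) (k : nat) : R :=
  match l with
  | [] => match k with O => 1 | S _ => 0 end
  | a :: l' => match k with O => 1 | S k' => a * esym l' k' + esym l' k end
  end.

Lemma esym_0 l : esym l 0 = 1. Proof. destruct l; reflexivity. Qed.

Lemma esym_swap a b l k : esym (a :: b :: l) k = esym (b :: a :: l) k.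
Proof. destruct k; simpl; [lra|]. destruct k; simpl; rewrite ?esym_0; lra. Qed.

Lemma esym_perm l1 l2 : Permutation l1 l2 -> forall k, esym l1 k = esym l2 k.
Proof.
  induction 1; intros k; auto.
  - destruct k; simpl; auto. rewrite !IHPermutation; auto.
  - apply esym_swap.
  - rewrite IHPermutation1; auto.
Qed.

Lemma esym_nonneg l k : Forall (fun x => 0 <= x) l -> 0 <= esym l k.
Proof.
  intros H; revert k; induction H; intros k; destruct k; simpl; try lra.
  pose proof (IHForall k); pose proof (IHForall (S k)); nra.
Qed.

Lemma pow_bern_ge s x k : 0 <= s -> 0 <= x -> s ^ S k + INR (S k) * x * s ^ k <= (s + x) ^ S k.
Proof.
  intros Hs Hx; induction k.
  - simpl; lra.
  - set (m := S k) in *. change ((s + x) ^ S m) with ((s + x) * (s + x) ^ m).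
    change (s ^ S m) with (s * s ^ m). rewrite S_INR.
    assert (0 <= s + x) by lra.
    assert (H1 : (s + x) * (s ^ m + INR m * x * s ^ k) <= (s + x) * (s + x) ^ m) by (apply Rmult_le_compat_l; auto).
    assert (Hsm : s ^ m = s * s ^ k) by reflexivity.
    assert (0 <= s ^ k) by (apply pow_le; auto).
    assert (0 <= INR m) by apply pos_INR.
    assert (0 <= INR m * x * x * s ^ k) by (repeat apply Rmult_le_pos; auto).
    rewrite Hsm in *. nra.
Qed.

Lemma esym_upper l k : Forall (fun x => 0 <= x) l -> INR (fact k) * esym l k <= sumR l ^ k.
Proof.
  intros H; revert k; induction H; intros k.
  - destruct k; simpl; [lra|]. rewrite Rmult_0_r, Rmult_0_l. lra.
  - destruct k; [simpl; lra|].
    assert (Hl : 0 <= sumR l) by (apply sumR_nonneg; auto).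
    change (sumR (x :: l)) with (x + sumR l).
    simpl esym. rewrite fact_simpl, mult_INR.
    pose proof (IHForall k) as H1. pose proof (IHForall (S k)) as H2.
    rewrite fact_simpl, mult_INR in H2.
    pose proof (pow_bern_ge (sumR l) x k Hl H) as H3.
    assert (INR (S k) * INR (fact k) * (x * esym l k) <= INR (S k) * x * sumR l ^ k).
    { assert (0 <= INR (S k) * x) by (apply Rmult_le_pos; [apply pos_INR|auto]). nra. }
    replace (x + sumR l) with (sumR l + x) by ring.
    assert (INR (S k) * INR (fact k) * esym l (S k) <= sumR l ^ S k) by exact H2.
    rewrite Rmult_plus_distr_l. lra.
Qed.

Lemma pow_diff_le a b M : 0 <= b <= a -> a ^ S M - b ^ S M <= INR (S M) * a ^ M * (a - b).
Proof.
  intros [Hb Hab]. induction M.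
  - simpl; lra.
  - set (u := a ^ S M) in *. set (v := b ^ S M) in *.
    change (a ^ S (S M)) with (a * u). change (b ^ S (S M)) with (b * v).
    change (a ^ S M) with u. rewrite S_INR.
    assert (Hu : u = a * a ^ M) by reflexivity.
    assert (v <= u) by (apply pow_incr; lra).
    assert (0 <= a - b) by lra.
    assert (a * (u - v) <= a * (INR (S M) * a ^ M * (a - b))) by (apply Rmult_le_compat_l; lra).
    assert (v * (a - b) <= u * (a - b)) by (apply Rmult_le_compat_r; lra).
    replace (a * u - b * v) with (a * (u - v) + v * (a - b)) by ring.
    rewrite Hu in *. lra.
Qed.

Definition Esum (k N : nat) : R := esym (map INR (seq 1 N)) k.

Lemma Esum_S k N : Esum (S k) (S N) = INR (S N) * Esum k N + Esum (S k) N.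
Proof.
  unfold Esum. rewrite (esym_perm (map INR (seq 1 (S N))) (INR (S N) :: map INR (seq 1 N))).
  - reflexivity.
  - rewrite seq_S, map_app. simpl. replace (1 + N)%nat with (S N) by lia.
    apply Permutation_sym, Permutation_cons_append.
Qed.

Lemma Esum_nonneg k N : 0 <= Esum k N.
Proof. apply esym_nonneg. rewrite Forall_forall; intros x Hx. apply in_map_iff in Hx as [y [<- _]]; apply pos_INR. Qed.

Lemma sum_seq1 N : sumR (map INR (seq 1 N)) = INR N * (INR N + 1) / 2.
Proof.
  induction N; [unfold sumR; simpl; lra|].
  rewrite seq_S, map_app, sumR_app, IHN.
  change (sumR (map INR [(1+N)%nat])) with (INR (1+N) + 0).
  replace (1+N)%nat with (S N) by lia.
  rewrite S_INR. lra.
Qed.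

Lemma Esum_upper k N : 2 ^ k * INR (fact k) * Esum k N <= (INR N * (INR N + 1)) ^ k.
Proof.
  pose proof (esym_upper (map INR (seq 1 N)) k) as H.
  rewrite sum_seq1 in H. unfold Esum.
  assert (Forall (fun x => 0 <= x) (map INR (seq 1 N))).
  { rewrite Forall_forall; intros x Hx. apply in_map_iff in Hx as [y [<- _]]; apply pos_INR. }
  specialize (H H0).
  replace ((INR N * (INR N + 1)) ^ k) with (2 ^ k * (INR N * (INR N + 1) / 2) ^ k).
  - rewrite Rmult_assoc. apply Rmult_le_compat_l; [apply pow_le; lra| exact H].
  - rewrite <- Rpow_mult_distr. f_equal. field.
Qed.

Lemma Esum_lower k N : INR (N - k) ^ (2 * k) <= 2 ^ k * INR (fact k) * Esum k N.
Proof.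
  revert N; induction k; intros N.
  - unfold Esum; rewrite esym_0; simpl; lra.
  - induction N.
    + simpl (0 - S k)%nat. rewrite INR_0, pow_i by lia.
      pose proof (Esum_nonneg (S k) 0). assert (0 <= 2 ^ S k * INR (fact (S k))).
      { apply Rmult_le_pos; [apply pow_le; lra| apply pos_INR]. } nra.
    + rewrite Esum_S.
      pose proof (IHk N) as H1.
      assert (Hpos : 0 <= 2 ^ S k * INR (fact (S k))) by (apply Rmult_le_pos; [apply pow_le; lra| apply pos_INR]).
      destruct (le_lt_dec (S N) (S k)) as [Hle|Hlt].
      * replace (S N - S k)%nat with 0%nat by lia. rewrite INR_0, pow_i by lia.
        pose proof (Esum_nonneg k N); pose proof (Esum_nonneg (S k) N).
        assert (0 <= INR (S N)) by apply pos_INR. 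
        assert (0 <= INR (S N) * Esum k N) by nra. nra.
      * replace (S N - S k)%nat with (S (N - S k)) by lia.
        set (t := INR (S (N - S k))).
        assert (Ht : INR (N - k) = t) by (unfold t; f_equal; lia).
        rewrite Ht in H1.
        assert (Ht1 : INR (N - S k) = t - 1) by (unfold t; rewrite S_INR; lra).
        rewrite Ht1 in IHN.
        assert (Ht0 : 1 <= t) by (unfold t; rewrite S_INR; pose proof (pos_INR (N - S k)); lra).
        assert (HtN : t <= INR (S N)) by (unfold t; apply le_INR; lia).
        replace (2 * S k)%nat with (S (S (2 * k))) by lia.
        pose proof (pow_diff_le t (t-1) (S (2*k))) as Hd.
        assert (0 <= t - 1 <= t) by lra. specialize (Hd H).
        replace (t - (t-1)) with 1 in Hd by lra.
        rewrite Rmult_1_r in Hd.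
        replace (2 * S k)%nat with (S (S (2 * k))) in IHN by lia.
        rewrite fact_simpl, mult_INR. simpl pow.
        simpl pow in IHN, Hd. rewrite fact_simpl, mult_INR in IHN. simpl pow in IHN.
        replace (2 * k)%nat with (k + k)%nat in *. 2: lia.
        assert (Hpk : t ^ (k + k) = t ^ k * t ^ k) by (rewrite pow_add; auto).
        assert (0 <= t ^ (k+k)) by (apply pow_le; lra).
        assert (HSk : INR (S (S (k + k))) = 2 * INR (S k)) by (rewrite !S_INR, plus_INR; lra).
        rewrite HSk in Hd.
        assert (H2 : INR (S N) * (t^(k+k)) <= INR (S N) * (2 ^ k * INR (fact k) * Esum k N)).
        { apply Rmult_le_compat_l; [apply pos_INR| exact H1]. }
        assert (H3 : 2 * INR (S k) * (t * t ^ (k + k)) <= 2 * INR (S k) * (INR (S N) * t ^ (k+k))).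
        { apply Rmult_le_compat_l; [rewrite S_INR; pose proof (pos_INR k); lra|].
          apply Rmult_le_compat_r; auto. }
        replace (k + (k+0))%nat with (k+k)%nat in * by lia.
        assert (H4 : 2 * INR (S k) * (INR (S N) * t ^ (k + k)) <= 2 * INR (S k) * (INR (S N) * (2 ^ k * INR (fact k) * Esum k N))).
        { apply Rmult_le_compat_l; [rewrite S_INR; pose proof (pos_INR k); lra| exact H2]. }
        assert (E : 2 * 2 ^ k * (INR (S k) * INR (fact k)) * (INR (S N) * Esum k N + Esum (S k) N)
           = 2 * INR (S k) * (INR (S N) * (2 ^ k * INR (fact k) * Esum k N)) + 2 * 2 ^ k * (INR (S k) * INR (fact k)) * Esum (S k) N) by ring.
        rewrite E. lra.
Qed.

Definition avg (K : nat) (f : nat -> R) : R := / INR K * sumR (map f (seq 0 K)).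

Fixpoint Ex (K m : nat) (f : list nat -> R) : R :=
  match m with
  | O => f []
  | S m' => avg K (fun g => Ex K m' (fun gs => f (g :: gs)))
  end.

Lemma avg_plus K f g : avg K (fun x => f x + g x) = avg K f + avg K g.
Proof. unfold avg; rewrite sumR_map_plus; ring. Qed.
Lemma avg_scal K a f : avg K (fun x => a * f x) = a * avg K f.
Proof. unfold avg; rewrite sumR_map_scal; ring. Qed.
Lemma avg_ext K f g : (forall x, f x = g x) -> avg K f = avg K g.
Proof. intros H; unfold avg; f_equal; apply sumR_map_ext; auto. Qed.
Lemma avg_le K f g : (forall x, f x <= g x) -> avg K f <= avg K g.
Proof. intros H; unfold avg. apply Rmult_le_compat_l.
  - destruct K; [simpl; rewrite Rinv_0; lra|]. left; apply Rinv_0_lt_compat, lt_0_INR; lia.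
  - apply sumR_map_le; auto. Qed.
Lemma avg_const K a : (1 <= K)%nat -> avg K (fun _ => a) = a.
Proof. intros H; unfold avg. rewrite sumR_const, length_seq. field. apply not_0_INR; lia. Qed.

Lemma Ex_ext K m f g : (forall x, f x = g x) -> Ex K m f = Ex K m g.
Proof. revert f g; induction m; intros f g H; simpl; auto. apply avg_ext; intros; apply IHm; auto. Qed.
Lemma Ex_plus K m f g : Ex K m (fun x => f x + g x) = Ex K m f + Ex K m g.
Proof. revert f g; induction m; intros f g; simpl; auto.
  rewrite <- avg_plus. apply avg_ext; intros; apply IHm. Qed.
Lemma Ex_scal K m a f : Ex K m (fun x => a * f x) = a * Ex K m f.
Proof. revert f; induction m; intros f; simpl; auto.
  rewrite <- avg_scal. apply avg_ext; intros; apply IHm. Qed.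
Lemma Ex_const K m a : (1 <= K)%nat -> Ex K m (fun _ => a) = a.
Proof. intros HK; induction m; simpl; auto. rewrite (avg_ext K _ (fun _ => a)); [apply avg_const; auto|]. intros; apply IHm. Qed.
Lemma Ex_le K m f g : (forall x, f x <= g x) -> Ex K m f <= Ex K m g.
Proof. revert f g; induction m; intros f g H; simpl; auto. apply avg_le; intros; apply IHm; auto. Qed.

(* cell centers *)
Definition Zc (K g : nat) : R := (2 * INR g + 1) / (2 * INR K) - 1/2.

Lemma rev_seq0 K : rev (seq 0 K) = map (fun g => (K - 1 - g)%nat) (seq 0 K).
Proof.
  induction K; auto.
  rewrite seq_S at 1. rewrite rev_app_distr. simpl. rewrite IHK.
  rewrite <- seq_shift, map_map. f_equal; [lia|]. apply map_ext; intros; lia.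
Qed.

Lemma sum_odd_zero K (f : nat -> R) : (forall g, (g < K)%nat -> f (K - 1 - g)%nat = - f g) ->
  sumR (map f (seq 0 K)) = 0.
Proof.
  intros H.
  assert (E : sumR (map f (seq 0 K)) = sumR (map f (rev (seq 0 K)))).
  { apply sumR_perm, Permutation_map, Permutation_rev. }
  rewrite rev_seq0, map_map in E.
  rewrite (sumR_map_ext (fun x => f (K - 1 - x)%nat) (fun g => - f g)) in E.
  - replace (sumR (map (fun g => - f g) (seq 0 K))) with (-1 * sumR (map f (seq 0 K))) in E.
    + lra.
    + rewrite <- sumR_map_scal. apply sumR_map_ext; intros; ring.
  - intros x Hx. apply in_seq in Hx. apply H. lia.
Qed.

Lemma Zc_sym K g : (g < K)%nat -> Zc K (K - 1 - g) = - Zc K g.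
Proof. intros H. unfold Zc. rewrite !minus_INR by lia. simpl. field. apply not_0_INR; lia. Qed.

Lemma avg_Z1 K : avg K (fun g => Zc K g) = 0.
Proof. unfold avg. rewrite sum_odd_zero; [ring|]. apply Zc_sym. Qed.
Lemma avg_Z3 K : avg K (fun g => Zc K g ^ 3) = 0.
Proof. unfold avg. rewrite sum_odd_zero; [ring|]. intros g Hg. rewrite Zc_sym; auto. ring. Qed.

Lemma Zc_bound K g : (g < K)%nat -> -(1/2) <= Zc K g <= 1/2.
Proof.
  intros H. unfold Zc. assert (0 < INR K) by (apply lt_0_INR; lia).
  assert (INR g + 1 <= INR K) by (rewrite <- S_INR; apply le_INR; lia).
  pose proof (pos_INR g).
  split.
  - assert (0 <= (2 * INR g + 1) / (2 * INR K)).
    { apply Rmult_le_pos; [lra| left; apply Rinv_0_lt_compat; lra]. } lra.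
  - assert ((2 * INR g + 1) / (2 * INR K) <= 1). { apply Rmult_le_reg_r with (2 * INR K); [lra|].
      unfold Rdiv; rewrite Rmult_assoc, Rinv_l; lra. } lra.
Qed.

Lemma avg_le_seq K f g : (forall x, (x < K)%nat -> f x <= g x) -> avg K f <= avg K g.
Proof. intros H; unfold avg. apply Rmult_le_compat_l.
  - destruct K; [simpl; rewrite Rinv_0; lra|]. left; apply Rinv_0_lt_compat, lt_0_INR; lia.
  - apply sumR_map_le; intros x Hx; apply in_seq in Hx; apply H; lia. Qed.

Lemma avg_Z2 K : (1 <= K)%nat -> 0 <= avg K (fun g => Zc K g ^ 2) <= 1/4.
Proof. intros HK. split.
  - rewrite <- (avg_const K 0) by auto. apply avg_le; intros; nra.
  - rewrite <- (avg_const K (1/4)) by auto. apply avg_le_seq; intros x Hx.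
    pose proof (Zc_bound K x Hx). nra. Qed.
Lemma avg_Z4 K : (1 <= K)%nat -> 0 <= avg K (fun g => Zc K g ^ 4) <= 1/16.
Proof. intros HK. split.
  - rewrite <- (avg_const K 0) by auto. apply avg_le; intros; simpl.
    assert (0 <= Zc K x * Zc K x) by nra. nra.
  - rewrite <- (avg_const K (1/16)) by auto. apply avg_le_seq; intros x Hx.
    pose proof (Zc_bound K x Hx). assert (Zc K x ^ 2 <= 1/4) by nra.
    assert (0 <= Zc K x ^2) by nra. replace (Zc K x ^ 4) with (Zc K x ^ 2 * Zc K x ^ 2) by ring. nra. Qed.

Fixpoint Fsum (K : nat) (P : list (list nat * R)) (gs : list nat) : R :=
  match P, gs with
  | t :: P', g :: gs' => snd t * Zc K g + Fsum K P' gs'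
  | _, _ => 0
  end.

Definition S2 (P : list (list nat * R)) : R := sumR (map (fun t => snd t ^ 2) P).

Lemma S2_nonneg P : 0 <= S2 P.
Proof. unfold S2. apply sumR_nonneg. rewrite Forall_forall; intros x Hx. apply in_map_iff in Hx as [? [<- _]]. nra. Qed.

Lemma moment2 K P : (1 <= K)%nat -> 0 <= Ex K (length P) (fun gs => Fsum K P gs ^ 2) <= S2 P / 4.
Proof.
  intros HK. induction P as [|t P IH].
  - simpl. unfold S2, sumR; simpl. lra.
  - simpl length. simpl Ex.
    set (E1 := Ex K (length P) (Fsum K P)).
    set (E2 := Ex K (length P) (fun gs => Fsum K P gs ^ 2)).
    rewrite (avg_ext K _ (fun g => (snd t)^2 * Zc K g ^ 2 + (2 * snd t * E1) * Zc K g + E2)).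
    2: { intros g. simpl Fsum.
         rewrite (Ex_ext K _ _ (fun gs => (snd t ^2 * Zc K g ^2) + ((2 * snd t * Zc K g) * Fsum K P gs + Fsum K P gs ^ 2))) by (intros; cbn [Fsum]; ring_simplify; reflexivity).
         rewrite Ex_plus, Ex_const, Ex_plus, Ex_scal by auto. unfold E1, E2. ring. }
    rewrite !avg_plus, avg_scal, avg_scal, avg_Z1, avg_const by auto.
    pose proof (avg_Z2 K HK).
    unfold S2 in *; simpl in *. fold E2 in IH.
    assert (0 <= snd t ^2) by nra.
    split; [nra|]. nra.
Qed.

Lemma moment4 K P : (1 <= K)%nat -> 0 <= Ex K (length P) (fun gs => Fsum K P gs ^ 4) <= 3 * S2 P ^ 2 / 16.
Proof.
  intros HK. induction P as [|t P IH].
  - simpl. unfold S2, sumR; simpl. lra.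
  - simpl length. simpl Ex.
    set (E1 := Ex K (length P) (Fsum K P)).
    set (E2 := Ex K (length P) (fun gs => Fsum K P gs ^ 2)).
    set (E3 := Ex K (length P) (fun gs => Fsum K P gs ^ 3)).
    set (E4 := Ex K (length P) (fun gs => Fsum K P gs ^ 4)).
    set (a := snd t).
    rewrite (avg_ext K _ (fun g => a^4 * Zc K g ^ 4 + ((4 * a^3 * E1) * Zc K g ^ 3 + ((6 * a^2 * E2) * Zc K g ^ 2 + ((4 * a * E3) * Zc K g + E4))))).
    2: { intros g. simpl Fsum. fold a.
         rewrite (Ex_ext K _ _ (fun gs => (a^4 * Zc K g ^4) + ((4 * a^3 * Zc K g ^ 3) * Fsum K P gs + ((6 * a^2 * Zc K g ^2) * Fsum K P gs ^ 2 + ((4 * a * Zc K g) * Fsum K P gs ^ 3 + Fsum K P gs ^ 4))))) by (intros; cbn [Fsum]; ring_simplify; reflexivity).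
         rewrite !Ex_plus, Ex_const, !Ex_scal by auto. unfold E1, E2, E3, E4. ring. }
    rewrite !avg_plus, !avg_scal, avg_Z1, avg_Z3, avg_const by auto.
    pose proof (avg_Z2 K HK). pose proof (avg_Z4 K HK).
    pose proof (moment2 K P HK) as M2. fold E2 in M2. fold E4 in IH.
    assert (HS : S2 (t :: P) = a ^ 2 + S2 P) by (unfold S2; simpl; fold a; unfold sumR; simpl; ring).
    rewrite HS. pose proof (S2_nonneg P).
    assert (0 <= a ^ 2) by nra. assert (0 <= a ^ 4) by (replace (a^4) with (a^2*a^2) by ring; nra).
    set (z2 := avg K (fun g => Zc K g ^ 2)) in *.
    set (z4 := avg K (fun g => Zc K g ^ 4)) in *.
    assert (a ^ 4 * z4 <= a^4 / 16) by nra.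
    assert (0 <= 6 * a ^ 2 * E2 * z2 <= 6 * a^2 * (S2 P / 4) / 4).
    { split. apply Rmult_le_pos; [apply Rmult_le_pos; [apply Rmult_le_pos; lra|lra]|lra].
      assert (a^2 * E2 <= a^2 * (S2 P / 4)) by (apply Rmult_le_compat_l; lra).
      assert (0 <= a^2 * E2) by (apply Rmult_le_pos; lra).
      assert (a^2 * E2 * z2 <= a^2 * (S2 P / 4) * (1/4)).
      { apply Rmult_le_compat; lra. } lra. }
    replace ((a ^ 2 + S2 P) ^ 2) with (a^4 + 2 * a^2 * S2 P + S2 P ^ 2) by ring.
    split; nra.
Qed.

Fixpoint grids (K m : nat) : list (list nat) :=
  match m with
  | O => [[]]
  | S m' => flat_map (fun g => map (cons g) (grids K m')) (seq 0 K)
  end.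

Lemma sumR_flat_map {A B} (f : B -> R) (h : A -> list B) l :
  sumR (map f (flat_map h l)) = sumR (map (fun x => sumR (map f (h x))) l).
Proof. induction l; simpl; auto. rewrite map_app, sumR_app, IHl. reflexivity. Qed.

Lemma sum_grids K m f : (1 <= K)%nat -> sumR (map f (grids K m)) = INR K ^ m * Ex K m f.
Proof.
  intros HK; revert f; induction m; intros f.
  - simpl. unfold sumR; simpl. ring.
  - simpl grids. rewrite sumR_flat_map.
    rewrite (sumR_map_ext _ (fun g => INR K ^ m * Ex K m (fun gs => f (g :: gs)))).
    + rewrite sumR_map_scal. simpl Ex. unfold avg. simpl pow. field. apply not_0_INR; lia.
    + intros g _. rewrite map_map. apply IHm.
Qed.

Lemma grids_prop K m gs : In gs (grids K m) -> length gs = m /\ Forall (fun g => (g < K)%nat) gs.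
Proof.
  revert gs; induction m; intros gs H; simpl in H.
  - destruct H as [<-|[]]; simpl; auto.
  - apply in_flat_map in H as [g [Hg H]]. apply in_map_iff in H as [gs' [<- H]].
    apply in_seq in Hg. apply IHm in H as [H1 H2]. simpl; split; auto.
    constructor; auto; lia.
Qed.

Lemma grids_in K gs : Forall (fun g => (g < K)%nat) gs -> In gs (grids K (length gs)).
Proof.
  induction 1; simpl; auto.
  apply in_flat_map. exists x; split; [apply in_seq; lia|]. apply in_map; auto.
Qed.

Fixpoint cellbox (K : nat) (P : list (list nat * R)) (gs : list nat) : box :=
  match P, gs with
  | t :: P', g :: gs' => (fst t, INR g / INR K, (INR g + 1) / INR K) :: cellbox K P' gs'
  | _, _ => []
  end.

Lemma cellbox_meas K P gs : (1 <= K)%nat -> length gs = length P -> box_meas (cellbox K P gs) = (/ INR K) ^ length P.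
Proof.
  intros HK; revert gs; induction P; intros gs Hl; destruct gs; simpl in *; try lia; auto.
  unfold box_meas in *; simpl. rewrite IHP by lia. field. apply not_0_INR; lia.
Qed.

Lemma cellbox_fst K P gs : length gs = length P -> map (fun t => fst (fst t)) (cellbox K P gs) = map fst P.
Proof. revert gs; induction P; intros gs Hl; destruct gs; simpl in *; try lia; auto. rewrite IHP; auto. Qed.

Lemma cellbox_wf n K P gs : (1 <= K)%nat -> length gs = length P -> Forall (fun g => (g < K)%nat) gs ->
  Forall (fun t => valid_index n (fst t)) P -> NoDup (map fst P) -> box_wf n (cellbox K P gs).
Proof.
  intros HK Hl Hg Hv Hnd. split; [|rewrite cellbox_fst; auto].
  revert gs Hl Hg; induction P; intros gs Hl Hg; destruct gs; simpl in *; try lia; auto.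
  inversion Hg; subst. inversion Hv; subst. inversion Hnd; subst.
  constructor; auto.
  simpl. split; auto.
  assert (0 < INR K) by (apply lt_0_INR; lia).
  assert (INR n0 + 1 <= INR K) by (rewrite <- S_INR; apply le_INR; lia).
  pose proof (pos_INR n0).
  split; [split|].
  - apply Rmult_le_pos; [lra| left; apply Rinv_0_lt_compat; lra].
  - unfold Rdiv. apply Rmult_le_compat_r; [left; apply Rinv_0_lt_compat; lra| lra].
  - apply Rmult_le_reg_r with (INR K); [lra|]. unfold Rdiv; rewrite Rmult_assoc, Rinv_l; lra.
Qed.

Definition Tx (x : list nat -> R) (P : list (list nat * R)) : R :=
  sumR (map (fun t => snd t * (x (fst t) - 1/2)) P).

Lemma floor_exists y : 0 <= y -> exists g : nat, INR g <= y < INR g + 1.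
Proof.
  intros Hy. destruct (archimed y) as [H1 H2].
  assert (Hu : (1 <= up y)%Z). { apply le_IZR. simpl. assert (IZR (up y) > 0) by lra.
    apply lt_IZR in H. apply IZR_le. lia. }
  exists (Z.to_nat (up y - 1)).
  rewrite INR_IZR_INZ, Z2Nat.id by lia. rewrite minus_IZR. simpl. lra.
Qed.

Lemma cell_exists K v : (1 <= K)%nat -> 0 <= v <= 1 ->
  exists g, (g < K)%nat /\ INR g / INR K <= v <= (INR g + 1) / INR K.
Proof.
  intros HK Hv. assert (HKp : 0 < INR K) by (apply lt_0_INR; lia).
  destruct (floor_exists (v * INR K)) as [g Hg]; [nra|].
  destruct (lt_dec g K) as [Hlt|Hge].
  - exists g; split; auto. split.
    + apply Rmult_le_reg_r with (INR K); auto. unfold Rdiv; rewrite Rmult_assoc, Rinv_l; lra.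
    + apply Rmult_le_reg_r with (INR K); auto. unfold Rdiv; rewrite Rmult_assoc, Rinv_l; lra.
  - assert (INR K <= INR g) by (apply le_INR; lia).
    exists (K - 1)%nat; split; [lia|]. rewrite minus_INR by lia. simpl.
    split.
    + apply Rmult_le_reg_r with (INR K); auto. unfold Rdiv; rewrite Rmult_assoc, Rinv_l; nra.
    + replace ((INR K - 1 + 1) / INR K) with 1 by (field; lra). lra.
Qed.

Lemma cover_cell K P x : (1 <= K)%nat -> (forall t, In t P -> 0 <= x (fst t) <= 1) ->
  exists gs, In gs (grids K (length P)) /\ in_box x (cellbox K P gs) /\
    Rabs (Tx x P - Fsum K P gs) <= sumR (map (fun t => Rabs (snd t)) P) / (2 * INR K).
Proof.
  intros HK; induction P as [|t P IH]; intros Hx.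
  - exists []. simpl. split; auto. split; [constructor|]. unfold Tx, sumR; simpl.
    rewrite Rminus_0_r, Rabs_R0. lra.
  - destruct IH as [gs [H1 [H2 H3]]]; [intros; apply Hx; simpl; auto|].
    destruct (cell_exists K (x (fst t)) HK) as [g [Hg1 Hg2]]; [apply Hx; simpl; auto|].
    exists (g :: gs). split; [|split].
    + simpl. apply in_flat_map. exists g; split; [apply in_seq; lia| apply in_map; auto].
    + constructor; auto.
    + unfold Tx in *. simpl map. unfold sumR in *. simpl fold_right. simpl Fsum.
      assert (HKp : 0 < INR K) by (apply lt_0_INR; lia).
      assert (Hc : Rabs (x (fst t) - 1/2 - Zc K g) <= 1 / (2 * INR K)).
      { unfold Zc. apply Rabs_le. destruct Hg2 as [Ha Hb].
        unfold Rdiv in *. split.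
        - apply Rmult_le_reg_r with (2 * INR K); [lra|].
          apply Rmult_le_compat_r with (r := INR K) in Ha; [|lra]. rewrite Rmult_assoc, Rinv_l in Ha by lra.
          replace ((x (fst t) - 1 * / 2 - ((2 * INR g + 1) * / (2 * INR K) - 1 * / 2)) * (2 * INR K))
            with (2 * (x (fst t) * INR K) - (2 * INR g + 1)) by (field; lra).
          replace (- (1 * / (2 * INR K)) * (2 * INR K)) with (-1) by (field; lra). lra.
        - apply Rmult_le_reg_r with (2 * INR K); [lra|].
          apply Rmult_le_compat_r with (r := INR K) in Hb; [|lra]. rewrite Rmult_assoc, Rinv_l in Hb by lra.
          replace ((x (fst t) - 1 * / 2 - ((2 * INR g + 1) * / (2 * INR K) - 1 * / 2)) * (2 * INR K))
            with (2 * (x (fst t) * INR K) - (2 * INR g + 1)) by (field; lra).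
          replace (1 * / (2 * INR K) * (2 * INR K)) with 1 by (field; lra). lra. }
      replace (snd t * (x (fst t) - 1 / 2) + fold_right Rplus 0 (map (fun t0 => snd t0 * (x (fst t0) - 1 / 2)) P) -
        (snd t * Zc K g + Fsum K P gs)) with
        (snd t * (x (fst t) - 1/2 - Zc K g) + (fold_right Rplus 0 (map (fun t0 => snd t0 * (x (fst t0) - 1 / 2)) P) - Fsum K P gs)) by ring.
      eapply Rle_trans; [apply Rabs_triang|].
      rewrite Rabs_mult.
      assert (Rabs (snd t) * Rabs (x (fst t) - 1 / 2 - Zc K g) <= Rabs (snd t) * (1 / (2 * INR K))).
      { apply Rmult_le_compat_l; auto. apply Rabs_pos. }
      unfold Rdiv in *. rewrite Rmult_plus_distr_r. lra.
Qed.

Lemma sumR_filter {A} (f : A -> R) (b : A -> bool) l :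
  sumR (map f (filter b l)) = sumR (map (fun x => if b x then f x else 0) l).
Proof. induction l; simpl; auto. destruct (b a); simpl; unfold sumR in *; simpl; rewrite IHl; ring. Qed.

Definition badb (K : nat) (P : list (list nat * R)) (eps : R) (gs : list nat) : bool :=
  if Rlt_dec (eps / 16) (Fsum K P gs ^ 4) then true else false.
Definition GPlist (K : nat) (P : list (list nat * R)) (eps : R) : list box :=
  map (cellbox K P) (filter (badb K P eps) (grids K (length P))).

Lemma GP (n K : nat) (P : list (list nat * R)) (eps : R) :
  (1 <= K)%nat -> 0 < eps -> (/ (2 * INR K)) ^ 4 <= eps / 16 ->
  Forall (fun t => valid_index n (fst t)) P -> NoDup (map fst P) ->
  Forall (fun t => 0 <= snd t) P -> sumR (map snd P) <= 1 ->
  Forall (box_wf n) (GPlist K P eps) /\ sumR (map box_meas (GPlist K P eps)) <= 3 * S2 P ^ 2 / eps /\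
    forall x, in_Omega n x -> Tx x P ^ 4 > eps -> exists B, In B (GPlist K P eps) /\ in_box x B.
Proof.
  intros HK He Heps Hv Hnd Ha Hs. unfold GPlist.
  set (bb := badb K P eps).
  assert (HKp : 0 < INR K) by (apply lt_0_INR; lia).
  split; [|split].
  - rewrite Forall_forall; intros B HB. apply in_map_iff in HB as [gs [<- HB]].
    apply filter_In in HB as [HB _]. apply grids_prop in HB as [H1 H2].
    apply cellbox_wf; auto.
  - rewrite map_map, sumR_filter.
    rewrite (sumR_map_ext _ (fun gs => (/ INR K) ^ length P * (if bb gs then 1 else 0))).
    2: { intros gs Hgs. apply grids_prop in Hgs as [H1 _]. destruct (bb gs); [|ring].
         rewrite cellbox_meas by auto. ring. }
    rewrite sumR_map_scal, sum_grids by auto.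
    rewrite <- Rmult_assoc, <- Rpow_mult_distr, Rinv_l, pow1, Rmult_1_l by lra.
    eapply Rle_trans.
    + apply (Ex_le K (length P) _ (fun gs => (16 / eps) * Fsum K P gs ^ 4)).
      intros gs. unfold bb, badb. destruct (Rlt_dec (eps / 16) (Fsum K P gs ^ 4)) as [Hl|Hl].
      * apply Rmult_le_reg_l with (eps / 16); [lra|]. field_simplify; lra.
      * assert (0 <= Fsum K P gs ^ 4) by (replace (Fsum K P gs ^ 4) with ((Fsum K P gs ^2)^2) by ring; apply pow2_ge_0).
        assert (0 <= 16 / eps) by (unfold Rdiv; apply Rmult_le_pos; [lra| left; apply Rinv_0_lt_compat; lra]).
        nra.
    + rewrite Ex_scal. pose proof (moment4 K P HK) as [_ M].
      apply Rmult_le_reg_l with (eps / 16); [lra|].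
      replace (eps / 16 * (16 / eps * Ex K (length P) (fun gs => Fsum K P gs ^ 4))) with (Ex K (length P) (fun gs => Fsum K P gs ^ 4)) by (field; lra).
      replace (eps / 16 * (3 * S2 P ^ 2 / eps)) with (3 * S2 P ^ 2 / 16) by (field; lra). exact M.
  - intros x Hx HT.
    destruct (cover_cell K P x HK) as [gs [H1 [H2 H3]]].
    { intros t Ht. apply Hx. rewrite Forall_forall in Hv. apply Hv; auto. }
    exists (cellbox K P gs). split; auto.
    apply in_map. apply filter_In. split; auto.
    unfold bb, badb. destruct (Rlt_dec (eps / 16) (Fsum K P gs ^ 4)) as [Hl|Hl]; auto.
    exfalso. apply Hl.
    assert (Hsa : sumR (map (fun t => Rabs (snd t)) P) <= 1).
    { rewrite (sumR_map_ext _ snd); auto. intros t Ht. rewrite Rabs_right; auto.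
      rewrite Forall_forall in Ha. apply Rle_ge, Ha; auto. }
    set (h := / (2 * INR K)) in *.
    assert (Hh : 0 < h) by (unfold h; apply Rinv_0_lt_compat; lra).
    assert (H3' : Rabs (Tx x P - Fsum K P gs) <= h).
    { eapply Rle_trans; [exact H3|]. unfold Rdiv. fold h. nra. }
    set (u := Rabs (Fsum K P gs)).
    assert (Hu0 : 0 <= u) by apply Rabs_pos.
    assert (HT1 : Rabs (Tx x P) <= u + h).
    { replace (Tx x P) with ((Tx x P - Fsum K P gs) + Fsum K P gs) by ring.
      eapply Rle_trans; [apply Rabs_triang|]. unfold u; lra. }
    assert (HT2 : Tx x P ^ 4 <= (u + h) ^ 4).
    { replace (Tx x P ^ 4) with (Rabs (Tx x P) ^ 4).
      - apply pow_incr; split; [apply Rabs_pos| auto].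
      - rewrite RPow_abs. apply Rabs_right. replace (Tx x P ^ 4) with ((Tx x P ^2)^2) by ring.
        apply Rle_ge, pow2_ge_0. }
    assert (HT3 : (u + h) ^ 4 <= 8 * (u ^ 4 + h ^ 4)).
    { assert (0 <= (u - h)^2 * ((u+h)^2 + 2*(u^2+h^2) )).
      { apply Rmult_le_pos; [apply pow2_ge_0| nra]. }
      nra. }
    assert (Hf : Fsum K P gs ^ 4 = u ^ 4).
    { unfold u. rewrite RPow_abs. rewrite Rabs_right; auto. replace (Fsum K P gs ^ 4) with ((Fsum K P gs ^2)^2) by ring.
      apply Rle_ge, pow2_ge_0. }
    rewrite Hf. lra.
Qed.

Lemma seq_sorted s k : Sorted lt (seq s k).
Proof.
  revert s; induction k; intros s; simpl; constructor; auto.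
  destruct k; simpl; constructor; lia.
Qed.

Lemma seq1_valid n : valid_index n (seq 1 (n - 1)).
Proof.
  split; [apply length_seq|split; [apply seq_sorted|]].
  rewrite Forall_forall; intros x Hx; apply in_seq in Hx; lia.
Qed.

Definition d0 (n : nat) : box := [(seq 1 (n - 1), 0, 0)].

Lemma d0_wf n : box_wf n (d0 n).
Proof. split; [constructor; [simpl; split; [apply seq1_valid| lra]| constructor]|]. simpl. constructor; [simpl; auto| constructor]. Qed.
Lemma d0_meas n : box_meas (d0 n) = 0.
Proof. unfold box_meas; simpl. ring. Qed.

Lemma box_meas_nonneg n B : box_wf n B -> 0 <= box_meas B.
Proof.
  intros [H _]. unfold box_meas. induction H; simpl; [lra|].
  apply Rmult_le_pos; auto. destruct H as [_ [[_ ?] _]]. lra.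
Qed.

Fixpoint LL (n : nat) (Ls : nat -> list box) (M : nat) : list box :=
  match M with
  | O => d0 n :: Ls O
  | S M' => LL n Ls M' ++ (d0 n :: Ls (S M'))
  end.

Lemma LL_len n Ls M : (S M <= length (LL n Ls M))%nat.
Proof. induction M; simpl; [lia|]. rewrite length_app; simpl; lia. Qed.

Lemma LL_prefix n Ls M M' : (M <= M')%nat -> exists t, LL n Ls M' = LL n Ls M ++ t.
Proof.
  induction 1.
  - exists []; rewrite app_nil_r; auto.
  - destruct IHle as [t Ht]. exists (t ++ d0 n :: Ls (S m)). simpl. rewrite Ht, app_assoc; auto.
Qed.

Lemma LL_nth n Ls M M' k : (M <= M')%nat -> (k < length (LL n Ls M))%nat ->
  nth k (LL n Ls M') (d0 n) = nth k (LL n Ls M) (d0 n).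
Proof. intros H1 H2. destruct (LL_prefix n Ls M M' H1) as [t ->]. apply app_nth1; auto. Qed.

Lemma LL_in n Ls j B : In B (Ls j) -> In B (LL n Ls j).
Proof. intros H. destruct j; simpl; auto. apply in_or_app; right; simpl; auto. Qed.

Lemma LL_sum n Ls M : sumR (map box_meas (LL n Ls M)) = sum_f_R0 (fun j => sumR (map box_meas (Ls j))) M.
Proof.
  induction M; simpl.
  - unfold sumR at 1; simpl. rewrite d0_meas. unfold sumR; ring.
  - rewrite map_app, sumR_app, IHM. simpl. unfold sumR at 2; simpl. rewrite d0_meas. unfold sumR; ring.
Qed.

Lemma LL_wf n Ls M : (forall j, Forall (box_wf n) (Ls j)) -> Forall (box_wf n) (LL n Ls M).
Proof. intros H; induction M; simpl; [constructor; auto; apply d0_wf|].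
  apply Forall_app; split; auto. constructor; auto; apply d0_wf. Qed.

Lemma sum_nth_le (l : list R) m d : Forall (fun x => 0 <= x) l -> (m < length l)%nat ->
  sum_f_R0 (fun k => nth k l d) m <= sumR l.
Proof.
  revert m; induction l; intros m Hl Hm; simpl in Hm; [lia|].
  inversion Hl; subst.
  destruct m.
  - simpl. unfold sumR; simpl. pose proof (sumR_nonneg l H2). unfold sumR in H; lra.
  - rewrite decomp_sum by lia. simpl pred. simpl nth.
    pose proof (IHl m H2 ltac:(lia)). unfold sumR in *; simpl. lra.
Qed.

Lemma null_from_lists n (N : (list nat -> R) -> Prop) :
  (forall eps, eps > 0 -> exists Ls : nat -> list box,
      (forall j, Forall (box_wf n) (Ls j)) /\
      (forall M, sum_f_R0 (fun j => sumR (map box_meas (Ls j))) M <= eps) /\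
      (forall x, in_Omega n x -> N x -> exists j B, In B (Ls j) /\ in_box x B)) ->
  null_set n N.
Proof.
  intros H eps He. destruct (H eps He) as [Ls [Hwf [Hsum Hcov]]].
  exists (fun k => nth k (LL n Ls k) (d0 n)). split; [|split].
  - intros k. pose proof (LL_wf n Ls k Hwf) as W. rewrite Forall_forall in W.
    apply W, nth_In. pose proof (LL_len n Ls k); lia.
  - intros m. eapply Rle_trans; [|apply (Hsum m)]. rewrite <- (LL_sum n).
    rewrite (sum_eq _ (fun k => nth k (map box_meas (LL n Ls m)) 0)).
    + apply sum_nth_le.
      * rewrite Forall_forall; intros y Hy. apply in_map_iff in Hy as [B [<- HB]].
        pose proof (LL_wf n Ls m Hwf) as W; rewrite Forall_forall in W. eapply box_meas_nonneg; eauto.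
      * rewrite length_map. pose proof (LL_len n Ls m); lia.
    + intros k Hk. cbv beta. replace 0 with (box_meas (d0 n)) by apply d0_meas. rewrite map_nth.
      rewrite (LL_nth n Ls k m k); auto. pose proof (LL_len n Ls k); lia.
  - intros x Hx HN. destruct (Hcov x Hx HN) as [j [B [HB Hin]]].
    apply (LL_in n) in HB. apply (In_nth _ _ (d0 n)) in HB as [k [Hk Hnth]].
    exists k. rewrite <- (LL_nth n Ls j (max j k) k) in Hnth by lia.
    rewrite (LL_nth n Ls k (max j k) k) in Hnth.
    + rewrite Hnth; auto.
    + lia.
    + pose proof (LL_len n Ls k); lia.
Qed.

Lemma combs_len k l I : In I (combs k l) -> length I = k.
Proof.
  revert k I; induction l; intros k I H; destruct k; simpl in H.
  - destruct H as [<-|[]]; auto.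
  - destruct H.
  - destruct H as [<-|[]]; auto.
  - apply in_app_or in H as [H|H].
    + apply in_map_iff in H as [I' [<- H]]. simpl. f_equal. eapply IHl; eauto.
    + eapply IHl; eauto.
Qed.

Lemma combs_incl k l I : In I (combs k l) -> incl I l.
Proof.
  revert k I; induction l; intros k I H; destruct k; simpl in H.
  - destruct H as [<-|[]]; intros x [].
  - destruct H.
  - destruct H as [<-|[]]; intros x [].
  - apply in_app_or in H as [H|H].
    + apply in_map_iff in H as [I' [<- H]]. apply incl_cons; [simpl; auto|].
      apply incl_tl. eapply IHl; eauto.
    + apply incl_tl. eapply IHl; eauto.
Qed.

Lemma combs_sorted k l I : StronglySorted lt l -> In I (combs k l) -> StronglySorted lt I.
Proof.
  revert k I; induction l; intros k I Hs H; destruct k; simpl in H.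
  - destruct H as [<-|[]]; constructor.
  - destruct H.
  - destruct H as [<-|[]]; constructor.
  - inversion Hs; subst.
    apply in_app_or in H as [H|H].
    + apply in_map_iff in H as [I' [<- H]]. constructor; [eapply IHl; eauto|].
      apply combs_incl in H. rewrite Forall_forall in *. intros x Hx; apply H3, H, Hx.
    + eapply IHl; eauto.
Qed.

Lemma combs_NoDup k l : NoDup l -> NoDup (combs k l).
Proof.
  revert k; induction l; intros k Hl; destruct k; simpl.
  - repeat constructor; auto.
  - constructor.
  - repeat constructor; auto.
  - inversion Hl; subst. apply NoDup_app.
    + apply FinFun.Injective_map_NoDup; auto. intros x y H; injection H; auto.
    + auto.
    + intros I HI HI'. apply in_map_iff in HI as [I' [<- _]].
      apply combs_incl in HI'. apply H1, HI'. simpl; auto.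
Qed.

Definition memb (I : list nat) (j : nat) : bool := existsb (Nat.eqb j) I.
Lemma memb_spec I j : memb I j = true <-> In j I.
Proof. unfold memb. rewrite existsb_exists. split.
  - intros [x [Hx Heq]]. apply Nat.eqb_eq in Heq; subst; auto.
  - intros H; exists j; split; auto; apply Nat.eqb_refl. Qed.

Definition cntlt (m : nat) (I : list nat) : nat := length (filter (fun i => Nat.ltb i m) I).

Lemma esym_combs (f : nat -> R) l k : sumR (map (fun I => prodR (map f I)) (combs k l)) = esym (map f l) k.
Proof.
  revert k; induction l; intros k; destruct k; try (simpl; unfold sumR, prodR; simpl; ring).
  simpl combs. rewrite map_app, sumR_app, map_map, IHl.
  rewrite (sumR_map_ext _ (fun x => f a * prodR (map f x))) by (intros; reflexivity).
  rewrite sumR_map_scal, IHl. simpl. ring.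
Qed.

Lemma G_sum (m : nat) (f : nat -> R) (A B : list nat) :
  Forall (fun a => (a < m)%nat) A -> Forall (fun b => (m < b)%nat) B ->
  forall k j,
  sumR (map (fun I => if andb (Nat.eqb (cntlt m I) j) (negb (memb I m)) then prodR (map f I) else 0)
            (combs k (A ++ m :: B)))
  = if Nat.leb j k then esym (map f A) j * esym (map f B) (k - j) else 0.
Proof.
  intros HA HB. induction A as [|a A IH]; intros k j.
  - simpl app. destruct k.
    + simpl. unfold sumR, cntlt; simpl. destruct j; simpl; rewrite ?esym_0; ring.
    + simpl combs. rewrite map_app, sumR_app.
      rewrite (sumR_map_ext _ (fun _ => 0)).
      2:{ intros I HI. apply in_map_iff in HI as [I' [<- _]]. unfold memb; simpl. rewrite Nat.eqb_refl.
          rewrite Bool.andb_false_r. auto. }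
      rewrite sumR_const, Rmult_0_r, Rplus_0_l.
      assert (Hc : forall I, In I (combs (S k) B) -> cntlt m I = 0%nat /\ memb I m = false).
      { intros I HI. apply combs_incl in HI. split.
        - unfold cntlt. destruct (filter (fun i => Nat.ltb i m) I) eqn:E; auto.
          assert (In n (filter (fun i => Nat.ltb i m) I)) by (rewrite E; simpl; auto).
          apply filter_In in H as [H1 H2]. apply HI in H1. rewrite Forall_forall in HB. apply HB in H1.
          apply Nat.ltb_lt in H2. lia.
        - destruct (memb I m) eqn:E; auto. apply memb_spec in E. apply HI in E.
          rewrite Forall_forall in HB. apply HB in E. lia. }
      destruct j.
      * rewrite (sumR_map_ext _ (fun I => prodR (map f I))).
        2:{ intros I HI. destruct (Hc I HI) as [-> ->]. reflexivity. }
        rewrite esym_combs. simpl. ring.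
      * rewrite (sumR_map_ext _ (fun _ => 0)).
        2:{ intros I HI. destruct (Hc I HI) as [-> ->]. reflexivity. }
        rewrite sumR_const, Rmult_0_r. simpl. destruct (Nat.leb j k); ring.
  - inversion HA; subst. specialize (IH H2).
    simpl app. destruct k.
    + simpl. unfold sumR, cntlt; simpl. destruct j; simpl; rewrite ?esym_0; ring.
    + simpl combs. rewrite map_app, sumR_app, map_map.
      assert (Hcons : forall I, cntlt m (a :: I) = S (cntlt m I) /\ memb (a :: I) m = memb I m).
      { intros I. unfold cntlt, memb; simpl. apply Nat.ltb_lt in H1. rewrite H1. split; auto.
        replace (Nat.eqb m a) with false; auto. symmetry; apply Nat.eqb_neq. apply Nat.ltb_lt in H1. lia. }
      destruct j.
      * rewrite (sumR_map_ext _ (fun _ => 0)).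
        2:{ intros I HI. destruct (Hcons I) as [-> _]. reflexivity. }
        rewrite sumR_const, Rmult_0_r, Rplus_0_l. rewrite IH. simpl. rewrite esym_0; ring.
      * rewrite (sumR_map_ext _ (fun I => f a * (if andb (Nat.eqb (cntlt m I) j) (negb (memb I m)) then prodR (map f I) else 0))).
        2:{ intros I HI. destruct (Hcons I) as [-> ->]. simpl Nat.eqb.
            destruct (andb _ _); [reflexivity| ring]. }
        rewrite sumR_map_scal, !IH. simpl Nat.leb. simpl esym.
        destruct (Nat.leb j k) eqn:E; [|ring].
        replace (S k - S j)%nat with (k - j)%nat by lia. ring.
Qed.

Lemma filter_perm {A} (f : A -> bool) l : Permutation l (filter f l ++ filter (fun x => negb (f x)) l).
Proof.
  induction l; simpl; auto. destruct (f a); simpl.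
  - constructor; auto.
  - apply Permutation_cons_app; auto.
Qed.

Lemma nth_seq_map (a d e : list nat) :
  map (fun l => nth l (a ++ d ++ e) 0%nat) (seq (length a) (length d)) = d.
Proof.
  revert a; induction d as [|y d IH]; intros a; simpl; auto.
  rewrite nth_middle. f_equal.
  specialize (IH (a ++ [y])). rewrite length_app in IH. simpl in IH.
  rewrite <- app_assoc in IH. simpl in IH. replace (length a + 1)%nat with (S (length a)) in IH by lia. exact IH.
Qed.

Lemma filter_all {A} (f : A -> bool) l : (forall x, In x l -> f x = true) -> filter f l = l.
Proof. induction l; intros H; simpl; auto. rewrite H by (simpl; auto). f_equal. apply IHl; intros; apply H; simpl; auto. Qed.

Lemma idx_prod (g : nat -> R) d1 x d2 :
  prodR (map (fun l => g (nth l (d1 ++ x :: d2) 0%nat))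
     (filter (fun l => negb (Nat.eqb l (length d1))) (seq 0 (length d1 + S (length d2)))))
  = prodR (map g d1) * prodR (map g d2).
Proof.
  rewrite seq_app. simpl (0 + length d1)%nat. simpl seq at 2. rewrite filter_app. simpl filter at 2.
  rewrite Nat.eqb_refl. simpl negb. cbv iota.
  rewrite (filter_all _ (seq 0 (length d1))).
  2:{ intros y Hy. apply in_seq in Hy. apply Bool.negb_true_iff, Nat.eqb_neq. lia. }
  rewrite (filter_all _ (seq (S (length d1)) (length d2))).
  2:{ intros y Hy. apply in_seq in Hy. apply Bool.negb_true_iff, Nat.eqb_neq. lia. }
  rewrite map_app, prodR_app. f_equal.
  - rewrite <- (map_map (fun l => nth l (d1 ++ x :: d2) 0%nat) g).
    pose proof (nth_seq_map [] d1 (x :: d2)) as H. simpl in H. rewrite H. auto.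
  - rewrite <- (map_map (fun l => nth l (d1 ++ x :: d2) 0%nat) g).
    pose proof (nth_seq_map (d1 ++ [x]) d2 []) as H. rewrite app_nil_r, <- app_assoc, length_app in H.
    simpl in H. replace (length d1 + 1)%nat with (S (length d1)) in H by lia. rewrite H. auto.
Qed.

Lemma prodR_map_inv {A} (h : A -> R) l : prodR (map (fun x => / h x) l) = / prodR (map h l).
Proof. induction l; unfold prodR in *; simpl. - rewrite Rinv_1; auto. - rewrite IHl, Rinv_mult; auto. Qed.

Lemma prodR_neq0 l : Forall (fun x => x <> 0) l -> prodR l <> 0.
Proof. induction 1; unfold prodR in *; simpl; [lra|]. apply Rmult_integral_contrapositive; auto. Qed.

Lemma rev_seq1 k : rev (seq 1 k) = map (fun i => (k + 1 - i)%nat) (seq 1 k).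
Proof.
  induction k; auto.
  rewrite seq_S at 1. rewrite rev_app_distr. simpl (rev [(1 + k)%nat]). rewrite IHk.
  change (seq 1 (S k)) with (1%nat :: seq 2 k). rewrite map_cons. f_equal; try lia.
  rewrite <- (seq_shift k 1), map_map. simpl app. replace (S k + 1 - 1)%nat with (S k) by lia. f_equal.
Qed.

Lemma prod_seq1 k : prodR (map INR (seq 1 k)) = INR (fact k).
Proof.
  induction k; [unfold prodR; simpl; auto|].
  rewrite seq_S, map_app, prodR_app, IHk.
  change (prodR (map INR [(1 + k)%nat])) with (INR (1 + k) * 1).
  replace (1 + k)%nat with (S k) by lia. rewrite fact_simpl, mult_INR. ring.
Qed.

Lemma map_sub_seq m s b : (m <= s)%nat -> map (fun i => (i - m)%nat) (seq s b) = seq (s - m) b.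
Proof. revert s; induction b; intros s H; simpl; auto. f_equal. rewrite IHb by lia. f_equal; lia. Qed.

Lemma prod_left m : (1 <= m)%nat -> prodR (map (fun i => Rabs (INR i - INR m)) (seq 1 (m - 1))) = INR (fact (m - 1)).
Proof.
  intros Hm. rewrite <- prod_seq1.
  rewrite (map_ext_in _ (fun i => INR (m - 1 + 1 - i))).
  2:{ intros i Hi. apply in_seq in Hi. rewrite <- Rabs_Ropp, Rabs_right.
      - rewrite minus_INR by lia. replace (m-1+1)%nat with m by lia. ring.
      - assert (INR i <= INR m) by (apply le_INR; lia). lra. }
  rewrite <- (map_map (fun i => (m - 1 + 1 - i)%nat) INR), <- rev_seq1, map_rev.
  apply prodR_perm, Permutation_sym, Permutation_rev.
Qed.

Lemma prod_right m b : prodR (map (fun i => Rabs (INR i - INR m)) (seq (m + 1) b)) = INR (fact b).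
Proof.
  rewrite <- prod_seq1.
  rewrite (map_ext_in _ (fun i => INR (i - m))).
  2:{ intros i Hi. apply in_seq in Hi. rewrite Rabs_right.
      - rewrite minus_INR by lia. ring.
      - assert (INR m <= INR i) by (apply le_INR; lia). lra. }
  rewrite <- (map_map (fun i => (i - m)%nat) INR), map_sub_seq by lia.
  replace (m + 1 - m)%nat with 1%nat by lia. reflexivity.
Qed.

Definition Vval (n r m : nat) (I : list nat) : R :=
  INR (fact (r - n)) * prodR (map (fun i => Rabs (INR i - INR m)) I) / (INR (fact (m - 1)) * INR (fact (r - m))).

Lemma perm_I r I : NoDup I -> incl I (seq 1 r) -> Permutation (filter (memb I) (seq 1 r)) I.
Proof.
  intros Hnd Hinc. apply NoDup_Permutation; [apply NoDup_filter, seq_NoDup| auto|].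
  intros x; rewrite filter_In, memb_spec. split; [tauto|]. intros H; split; auto.
Qed.

Lemma pure_entry_char n r I p q :
  (1 <= n <= r)%nat -> (1 <= q)%nat -> (p <= r - n)%nat -> (p + q <= r)%nat ->
  NoDup I -> incl I (seq 1 r) -> length I = (n - 1)%nat ->
  pure_entry n r I p q =
  if andb (Nat.eqb (cntlt (p + q) I) (q - 1)) (negb (memb I (p + q))) then Vval n r (p + q) I else 0.
Proof.
  intros Hn Hq Hp Hm Hnd Hinc Hlen.
  set (m := (p + q)%nat) in *.
  set (P := fun j => negb (memb I j)).
  assert (Hd : compl r I = filter P (seq 1 r)) by reflexivity.
  assert (Hperm : Permutation (seq 1 r) (compl r I ++ I)).
  { rewrite Hd. eapply Permutation_trans; [apply (filter_perm P)|]. apply Permutation_app_head.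
    eapply Permutation_trans; [|apply (perm_I r I Hnd Hinc)].
    rewrite (filter_ext _ (memb I)); auto. intros; unfold P; apply Bool.negb_involutive. }
  assert (HlenD : length (compl r I) = (r - n + 1)%nat).
  { apply Permutation_length in Hperm. rewrite length_app, length_seq in Hperm. lia. }
  assert (Hsplit : seq 1 r = seq 1 (m - 1) ++ m :: seq (m + 1) (r - m)).
  { replace r with ((m - 1) + S (r - m))%nat at 1 by lia. rewrite seq_app. f_equal.
    simpl. f_equal; [lia|]. f_equal. lia. }
  set (d1 := filter P (seq 1 (m - 1))).
  set (d2 := filter P (seq (m + 1) (r - m))).
  assert (HNDd : NoDup (compl r I)) by (rewrite Hd; apply NoDup_filter, seq_NoDup).
  assert (Hcnt : (length d1 + cntlt m I)%nat = (m - 1)%nat).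
  { pose proof (filter_perm P (seq 1 (m - 1))) as H. apply Permutation_length in H.
    rewrite length_app, length_seq in H. fold d1 in H. rewrite H. f_equal.
    unfold cntlt. apply Permutation_length. apply NoDup_Permutation.
    - apply NoDup_filter, Hnd.
    - apply NoDup_filter, seq_NoDup.
    - intros x. rewrite !filter_In, in_seq. unfold P. rewrite Bool.negb_involutive, memb_spec, Nat.ltb_lt.
      split; [|intros [H1 H2]; split; auto; lia]. intros [H1 H2]; split; auto.
      pose proof (Hinc _ H1) as H3. apply in_seq in H3. lia. }
  unfold pure_entry. cbv zeta.
  destruct (memb I m) eqn:Hmem.
  - rewrite Bool.andb_false_r.
    destruct (Nat.eqb q (nth p (compl r I) 0%nat - p)) eqn:E; auto.
    exfalso. apply Nat.eqb_eq in E.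
    assert (Hin : In (nth p (compl r I) 0%nat) (compl r I)) by (apply nth_In; lia).
    replace (nth p (compl r I) 0%nat) with m in Hin by lia.
    rewrite Hd in Hin. apply filter_In in Hin as [_ Hin]. unfold P in Hin. rewrite Hmem in Hin. discriminate.
  - simpl negb. rewrite Bool.andb_true_r.
    assert (Hdd : compl r I = d1 ++ m :: d2).
    { rewrite Hd, Hsplit, filter_app. simpl. unfold P at 2. rewrite Hmem. simpl. reflexivity. }
    destruct (Nat.eqb (cntlt m I) (q - 1)) eqn:Ec.
    + apply Nat.eqb_eq in Ec.
      assert (Hl1 : length d1 = p) by lia.
      assert (Hnth : nth p (compl r I) 0%nat = m).
      { rewrite Hdd, <- Hl1. apply nth_middle. }
      rewrite Hnth. replace (m - p)%nat with q by lia. rewrite Nat.eqb_refl.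
      assert (HL : (r - n + 1)%nat = (length d1 + S (length d2))%nat).
      { rewrite <- HlenD, Hdd, length_app. simpl. lia. }
      rewrite HL, Hdd, <- Hl1.
      change (fold_right Rmult 1) with prodR. rewrite (idx_prod (fun j => / Rabs (INR j - INR m)) d1 m d2).
      rewrite !prodR_map_inv.
      set (h := fun i => Rabs (INR i - INR m)).
      assert (Hperm2 : Permutation (seq 1 (m - 1) ++ seq (m + 1) (r - m)) (d1 ++ d2 ++ I)).
      { apply Permutation_app_inv with (a := m). rewrite <- Hsplit.
        eapply Permutation_trans; [exact Hperm|]. rewrite Hdd. rewrite <- app_assoc. simpl. apply Permutation_refl. }
      apply (Permutation_map h), prodR_perm in Hperm2.
      rewrite !map_app, !prodR_app in Hperm2. unfold h in Hperm2. rewrite prod_left, prod_right in Hperm2 by lia.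
      fold h in Hperm2.
      assert (HI : prodR (map h I) <> 0).
      { apply prodR_neq0. rewrite Forall_forall; intros y Hy. apply in_map_iff in Hy as [i [<- Hi]].
        unfold h. intros Habs. assert (INR i = INR m) by (destruct (Rcase_abs (INR i - INR m)); [rewrite Rabs_left in Habs|rewrite Rabs_right in Habs]; lra). apply INR_eq in H.
        subst i. apply memb_spec in Hi. rewrite Hi in Hmem; discriminate. }
      assert (F1 : INR (fact (m - 1)) <> 0) by (apply not_0_INR, fact_neq_0).
      assert (F2 : INR (fact (r - m)) <> 0) by (apply not_0_INR, fact_neq_0).
      unfold Vval. fold h.
      assert (Hpd : prodR (map h d1) * prodR (map h d2) = INR (fact (m - 1)) * INR (fact (r - m)) / prodR (map h I)).
      { rewrite Hperm2. field. auto. }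
      rewrite <- Rinv_mult, Hpd. field. repeat split; auto.
    + destruct (Nat.eqb q (nth p (compl r I) 0%nat - p)) eqn:E; auto.
      exfalso. apply Nat.eqb_eq in E.
      assert (Hnth : nth p (compl r I) 0%nat = m) by lia.
      assert (Hnth2 : nth (length d1) (compl r I) 0%nat = m) by (rewrite Hdd; apply nth_middle).
      rewrite NoDup_nth with (d := 0%nat) in HNDd.
      assert (p = length d1).
      { apply HNDd; [lia| rewrite Hdd, length_app; simpl; lia| congruence]. }
      apply Nat.eqb_neq in Ec. lia.
Qed.

Lemma seq_ssorted s k : StronglySorted lt (seq s k).
Proof. apply Sorted_StronglySorted; [intros ? ? ?; lia| apply seq_sorted]. Qed.

Lemma combs_valid n r I : In I (combs (n - 1) (seq 1 r)) -> valid_index n I /\ NoDup I /\ incl I (seq 1 r).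
Proof.
  intros H. pose proof (combs_sorted _ _ _ (seq_ssorted 1 r) H) as Hs.
  pose proof (combs_incl _ _ _ H) as Hi.
  split; [split; [eapply combs_len; eauto| split]|split; auto].
  - apply StronglySorted_Sorted; auto.
  - rewrite Forall_forall; intros x Hx. apply Hi, in_seq in Hx. lia.
  - clear H Hi. induction Hs; constructor; auto. intros Hin. rewrite Forall_forall in H. apply H in Hin. lia.
Qed.

Definition hm (m : nat) (i : nat) : R := Rabs (INR i - INR m).

Definition pref (n r m : nat) : R := INR (fact (r - n)) / (INR (fact (m - 1)) * INR (fact (r - m))).

Lemma Vval_pref n r m I : Vval n r m I = pref n r m * prodR (map (hm m) I).
Proof. unfold Vval, pref, hm. field. split; apply not_0_INR, fact_neq_0. Qed.

Lemma map_h_left m : (1 <= m)%nat -> Permutation (map (hm m) (seq 1 (m - 1))) (map INR (seq 1 (m - 1))).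
Proof.
  intros Hm.
  rewrite (map_ext_in _ (fun i => INR (m - 1 + 1 - i))).
  2:{ intros i Hi. apply in_seq in Hi. unfold hm. rewrite <- Rabs_Ropp, Rabs_right.
      - rewrite minus_INR by lia. replace (m-1+1)%nat with m by lia. ring.
      - assert (INR i <= INR m) by (apply le_INR; lia). lra. }
  rewrite <- (map_map (fun i => (m - 1 + 1 - i)%nat) INR), <- rev_seq1, map_rev.
  apply Permutation_sym, Permutation_rev.
Qed.

Lemma map_h_right m b : map (hm m) (seq (m + 1) b) = map INR (seq 1 b).
Proof.
  rewrite (map_ext_in _ (fun i => INR (i - m))).
  2:{ intros i Hi. apply in_seq in Hi. unfold hm. rewrite Rabs_right.
      - rewrite minus_INR by lia. ring.
      - assert (INR m <= INR i) by (apply le_INR; lia). lra. }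
  rewrite <- (map_map (fun i => (i - m)%nat) INR), map_sub_seq by lia.
  replace (m + 1 - m)%nat with 1%nat by lia. reflexivity.
Qed.

Definition Wsum (n r p q : nat) : R :=
  sumR (map (fun I => pure_entry n r I p q) (combs (n - 1) (seq 1 r))).

Lemma Wsum_formula n r p q :
  (1 <= n <= r)%nat -> (1 <= q <= n)%nat -> (p <= r - n)%nat ->
  Wsum n r p q = pref n r (p + q) * Esum (q - 1) (p + q - 1) * Esum (n - q) (r - (p + q)).
Proof.
  intros Hn Hq Hp. set (m := (p + q)%nat).
  assert (Hm : (m <= r)%nat) by (unfold m; lia).
  unfold Wsum.
  rewrite (sumR_map_ext _ (fun I => pref n r m *
     (if andb (Nat.eqb (cntlt m I) (q - 1)) (negb (memb I m)) then prodR (map (hm m) I) else 0))).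
  2:{ intros I HI. destruct (combs_valid n r I HI) as [[Hl _] [Hnd Hinc]].
      rewrite pure_entry_char by (auto; lia). fold m.
      destruct (andb _ _); [apply Vval_pref| ring]. }
  rewrite sumR_map_scal.
  assert (Hsplit : seq 1 r = seq 1 (m - 1) ++ m :: seq (m + 1) (r - m)).
  { replace r with ((m - 1) + S (r - m))%nat at 1 by lia. rewrite seq_app. f_equal.
    simpl. f_equal; [lia|]. f_equal. lia. }
  rewrite Hsplit, G_sum.
  - replace (Nat.leb (q - 1) (n - 1)) with true by (symmetry; apply Nat.leb_le; lia).
    rewrite (esym_perm _ _ (map_h_left m ltac:(lia))), map_h_right.
    replace (n - 1 - (q - 1))%nat with (n - q)%nat by lia. unfold Esum. ring.
  - rewrite Forall_forall; intros x Hx; apply in_seq in Hx; lia.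
  - rewrite Forall_forall; intros x Hx; apply in_seq in Hx; lia.
Qed.

Lemma prodR_le_pow l c : Forall (fun x => 0 <= x <= c) l -> prodR l <= c ^ length l.
Proof.
  induction 1; unfold prodR in *; simpl; [lra|].
  assert (0 <= fold_right Rmult 1 l) by (apply prodR_nonneg; eapply Forall_impl; [|exact H0]; simpl; intros; lra).
  apply Rmult_le_compat; lra.
Qed.

Lemma pref_pos n r m : 0 < pref n r m.
Proof. unfold pref. apply Rdiv_lt_0_compat; [apply lt_0_INR, lt_O_fact| apply Rmult_lt_0_compat; apply lt_0_INR, lt_O_fact]. Qed.

Lemma weight_bounds n r p q I :
  (1 <= n <= r)%nat -> (1 <= q <= n)%nat -> (p <= r - n)%nat -> In I (combs (n - 1) (seq 1 r)) ->
  0 <= pure_entry n r I p q <= pref n r (p + q) * INR r ^ (n - 1).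
Proof.
  intros Hn Hq Hp HI. destruct (combs_valid n r I HI) as [[Hl _] [Hnd Hinc]].
  rewrite pure_entry_char by (auto; lia).
  pose proof (pref_pos n r (p + q)).
  assert (Hpow : 0 <= INR r ^ (n - 1)) by (apply pow_le, pos_INR).
  destruct (andb _ _); [|split; [lra| nra]].
  rewrite Vval_pref.
  assert (Hb : Forall (fun x => 0 <= x <= INR r) (map (hm (p + q)) I)).
  { rewrite Forall_forall; intros y Hy. apply in_map_iff in Hy as [i [<- Hi]].
    apply Hinc, in_seq in Hi. unfold hm. split; [apply Rabs_pos|]. apply Rabs_le.
    assert (INR i <= INR r) by (apply le_INR; lia). assert (INR (p + q) <= INR r) by (apply le_INR; lia).
    pose proof (pos_INR i). pose proof (pos_INR (p + q)). lra. }
  pose proof (prodR_le_pow _ _ Hb) as H1. rewrite length_map, Hl in H1.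
  assert (0 <= prodR (map (hm (p+q)) I)) by (apply prodR_nonneg; eapply Forall_impl; [|exact Hb]; simpl; intros; lra).
  split; [nra|]. apply Rmult_le_compat_l; lra.
Qed.

Definition hk (k s : nat) : R :=
  2 ^ k * INR (fact k) * Esum k (s + k) * INR (fact s) / (INR (fact (s + k)) * INR s ^ k).

Lemma fact_ratio s k : INR (fact s) * INR s ^ k <= INR (fact (s + k)) <= INR (fact s) * INR (s + k) ^ k.
Proof.
  induction k.
  - rewrite Nat.add_0_r; simpl; lra.
  - replace (s + S k)%nat with (S (s + k)) by lia. rewrite fact_simpl, mult_INR.
    assert (0 <= INR (fact s)) by apply pos_INR.
    assert (0 <= INR s ^ k) by (apply pow_le, pos_INR).
    assert (INR s <= INR (S (s + k))) by (apply le_INR; lia).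
    assert (INR (s + k) <= INR (S (s + k))) by (apply le_INR; lia).
    assert (0 <= INR (s + k)) by apply pos_INR.
    assert (0 <= INR (s + k) ^ k) by (apply pow_le, pos_INR).
    assert (INR (s + k) ^ k <= INR (S (s + k)) ^ k) by (apply pow_incr; lra).
    rewrite <- !tech_pow_Rmult. destruct IHk as [G1 G2]. split.
    + assert (INR s * (INR (fact s) * INR s ^ k) <= INR (S (s + k)) * INR (fact (s + k))).
      { apply Rmult_le_compat; [apply pos_INR| apply Rmult_le_pos; auto| lra| lra]. } nra.
    + assert (INR (S (s + k)) * INR (fact (s + k)) <= INR (S (s + k)) * (INR (fact s) * INR (S (s + k)) ^ k)).
      { apply Rmult_le_compat_l; [apply pos_INR|]. assert (INR (fact s) * INR (s+k) ^ k <= INR (fact s) * INR (S (s + k)) ^ k) by (apply Rmult_le_compat_l; auto). lra. }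
      nra.
Qed.

Lemma bern_low t k : 0 <= t <= 1 -> 1 - INR k * t <= (1 - t) ^ k.
Proof.
  intros Ht. induction k; [simpl; lra|]. rewrite S_INR, <- tech_pow_Rmult.
  assert (0 <= 1 - t) by lra. assert (0 <= (1-t)^k) by (apply pow_le; lra).
  assert (0 <= INR k) by apply pos_INR.
  assert ((1 - t) * (1 - INR k * t) <= (1 - t) * (1 - t) ^ k) by (apply Rmult_le_compat_l; lra).
  assert (0 <= INR k * t * t) by (apply Rmult_le_pos; [apply Rmult_le_pos|]; lra).
  nra.
Qed.

Definition aK (k : nat) : R := 2 * INR k + 1 + INR k * (INR k + 1).
Definition BK (k : nat) : R := INR k ^ 2 + INR k * aK k * (1 + aK k) ^ k.

Lemma hk_bound k s : (1 <= s)%nat -> Rabs (hk k s - 1) <= BK k / INR s.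
Proof.
  intros Hs. set (x := INR s).
  assert (Hx : 1 <= x) by (unfold x; apply (le_INR 1); lia).
  set (kr := INR k). assert (Hk : 0 <= kr) by apply pos_INR.
  pose proof (Esum_lower k (s + k)) as L. replace (s + k - k)%nat with s in L by lia. fold x in L.
  pose proof (Esum_upper k (s + k)) as U. rewrite plus_INR in U. fold x kr in U.
  pose proof (fact_ratio s k) as [F1 F2]. rewrite plus_INR in F2. fold x kr in F1, F2.
  set (N := 2 ^ k * INR (fact k) * Esum k (s + k)) in *.
  set (fs := INR (fact s)) in *. set (fsk := INR (fact (s + k))) in *.
  assert (Hfs : 0 < fs) by (apply lt_0_INR, lt_O_fact).
  assert (Hxk : 0 < x ^ k) by (apply pow_lt; lra).
  assert (Hfsk : 0 < fsk) by (apply lt_0_INR, lt_O_fact).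
  assert (Hh : hk k s = N * fs / (fsk * x ^ k)) by reflexivity.
  assert (Hx2k : x ^ (2 * k) = x ^ k * x ^ k) by (replace (2 * k)%nat with (k + k)%nat by lia; apply pow_add).
  assert (HBp : 0 <= aK k) by (unfold aK; fold kr; nra).
  apply Rabs_le. split.
  -
    assert (H1 : (x / (x + kr)) ^ k <= hk k s).
    { rewrite Hh. unfold Rdiv. rewrite Rpow_mult_distr, pow_inv.
      apply Rmult_le_reg_r with ((x + kr) ^ k * (fsk * x ^ k)).
      { apply Rmult_lt_0_compat; [apply pow_lt; lra| nra]. }
      replace (x ^ k * / (x + kr) ^ k * ((x + kr) ^ k * (fsk * x ^ k))) with (x ^ k * x ^ k * fsk).
      2:{ field. apply pow_nonzero; lra. }
      replace (N * fs * / (fsk * x ^ k) * ((x + kr) ^ k * (fsk * x ^ k))) with (N * (fs * (x + kr) ^ k)) by (field; lra).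
      rewrite <- Hx2k. apply Rmult_le_compat; [apply pow_le; lra| lra| exact L| exact F2]. }
    assert (H2 : 1 - kr * (kr / (x + kr)) <= (x / (x + kr)) ^ k).
    { replace (x / (x + kr)) with (1 - kr / (x + kr)) by (field; lra).
      apply bern_low. split; [apply Rmult_le_pos; [lra| left; apply Rinv_0_lt_compat; lra]|].
      apply Rmult_le_reg_r with (x + kr); [lra|]. unfold Rdiv; rewrite Rmult_assoc, Rinv_l; lra. }
    assert (H3 : kr * (kr / (x + kr)) <= kr ^ 2 / x).
    { unfold Rdiv. replace (kr ^ 2 * / x) with (kr * (kr * / x)) by ring.
      apply Rmult_le_compat_l; auto. apply Rmult_le_compat_l; auto. apply Rinv_le_contravar; lra. }
    assert (H4 : kr ^ 2 / x <= BK k / x).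
    { unfold BK. fold kr. unfold Rdiv. apply Rmult_le_compat_r; [left; apply Rinv_0_lt_compat; lra|].
      assert (0 <= kr * aK k * (1 + aK k) ^ k) by (apply Rmult_le_pos; [nra| apply pow_le; lra]). lra. }
    lra.
  -
    set (y := (x + kr) * (x + kr + 1) / (x * x) - 1).
    assert (Hy0 : 0 <= y).
    { unfold y. apply Rplus_le_reg_r with 1. ring_simplify.
      apply Rmult_le_reg_r with (x * x); [nra|]. unfold Rdiv. rewrite Rmult_assoc, Rinv_l by nra. nra. }
    assert (Hya : y <= aK k / x).
    { unfold y, aK. fold kr. apply Rmult_le_reg_r with (x * x); [nra|].
      replace (((x + kr) * (x + kr + 1) / (x * x) - 1) * (x * x)) with ((2 * kr + 1) * x + kr * (kr + 1)) by (field; lra).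
      replace ((2 * kr + 1 + kr * (kr + 1)) / x * (x * x)) with ((2 * kr + 1) * x + kr * (kr + 1) * x) by (field; lra).
      assert (kr * (kr + 1) <= kr * (kr + 1) * x) by (rewrite <- (Rmult_1_r (kr * (kr + 1))) at 1; apply Rmult_le_compat_l; nra).
      lra. }
    assert (H1 : hk k s <= (1 + y) ^ k).
    { rewrite Hh. replace (1 + y) with ((x + kr) * (x + kr + 1) / (x * x)) by (unfold y; ring).
      unfold Rdiv. rewrite Rpow_mult_distr, pow_inv.
      apply Rmult_le_reg_r with (fsk * x ^ k).
      { nra. }
      replace (N * fs * / (fsk * x ^ k) * (fsk * x ^ k)) with (N * fs) by (field; lra).
      replace ((x * x) ^ k) with (x ^ k * x ^ k) by (rewrite Rpow_mult_distr; auto).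
      apply Rmult_le_reg_r with (x ^ k * x ^ k); [nra|].
      replace (((x + kr) * (x + kr + 1)) ^ k * / (x ^ k * x ^ k) * (fsk * x ^ k) * (x ^ k * x ^ k))
        with (((x + kr) * (x + kr + 1)) ^ k * (fsk * x ^ k)) by (field; lra).
      rewrite Hx2k in L.
      assert (N * fs * (x ^ k * x ^ k) <= N * fsk * x ^ k).
      {
        assert (0 <= N) by (eapply Rle_trans; [|exact L]; apply Rmult_le_pos; apply pow_le; lra).
        replace (N * fs * (x ^ k * x ^ k)) with (N * (fs * x ^ k) * x ^ k) by ring.
        apply Rmult_le_compat_r; [lra|]. apply Rmult_le_compat_l; auto. }
      assert (N * fsk * x ^ k <= ((x + kr) * (x + kr + 1)) ^ k * (fsk * x ^ k)).
      { replace (N * fsk * x ^ k) with (N * (fsk * x ^ k)) by ring. apply Rmult_le_compat_r; [nra| exact U]. }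
      lra. }
    assert (H2 : (1 + y) ^ k - 1 <= kr * (1 + aK k) ^ k * y).
    { destruct k as [|k'].
      - simpl. unfold kr; simpl. lra.
      - pose proof (pow_diff_le (1 + y) 1 k') as D. rewrite pow1 in D.
        replace (1 + y - 1) with y in D by ring. fold kr in D.
        assert (Hp : (1 + y) ^ k' <= (1 + aK (S k')) ^ S k').
        { apply Rle_trans with ((1 + aK (S k')) ^ k').
          - apply pow_incr. split; [lra|]. assert (aK (S k') / x <= aK (S k')).
            { unfold Rdiv. rewrite <- (Rmult_1_r (aK (S k'))) at 2. apply Rmult_le_compat_l; auto.
              rewrite <- Rinv_1. apply Rinv_le_contravar; lra. } lra.
          - simpl. rewrite <- (Rmult_1_l ((1 + aK (S k')) ^ k')) at 1. apply Rmult_le_compat_r; [apply pow_le|]; lra. }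
        assert (kr * (1 + y) ^ k' * y <= kr * (1 + aK (S k')) ^ S k' * y).
        { apply Rmult_le_compat_r; auto. apply Rmult_le_compat_l; auto. }
        assert (0 <= 1 <= 1 + y) by lra. specialize (D H0). lra. }
    assert (H3 : kr * (1 + aK k) ^ k * y <= kr * (1 + aK k) ^ k * (aK k / x)).
    { apply Rmult_le_compat_l; auto. apply Rmult_le_pos; auto. apply pow_le; lra. }
    assert (H4 : kr * (1 + aK k) ^ k * (aK k / x) <= BK k / x).
    { unfold BK. fold kr. unfold Rdiv.
      replace (kr * (1 + aK k) ^ k * (aK k * / x)) with ((kr * aK k * (1 + aK k) ^ k) * / x) by ring.
      apply Rmult_le_compat_r; [left; apply Rinv_0_lt_compat; lra|]. nra. }
    lra.
Qed.

Lemma Un_cv_bound (u : nat -> R) l A N0 :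
  (forall r, (N0 <= r)%nat -> Rabs (u r - l) <= A / INR r) -> Un_cv u l.
Proof.
  intros H e He.
  destruct (archimed (Rabs A / e)) as [Ha _].
  set (N := (N0 + 1 + Z.to_nat (up (Rabs A / e)))%nat).
  exists N. intros r Hr. unfold Rdist.
  assert (Hr0 : 0 < INR r) by (apply lt_0_INR; unfold N in Hr; lia).
  assert (Hup : Rabs A / e < INR r).
  { assert (IZR (up (Rabs A / e)) <= INR (Z.to_nat (up (Rabs A / e)))).
    { destruct (Z_le_gt_dec 0 (up (Rabs A / e))).
      - rewrite INR_IZR_INZ, Z2Nat.id by lia; lra.
      - assert (IZR (up (Rabs A / e)) < 0) by (apply IZR_lt; lia). pose proof (pos_INR (Z.to_nat (up (Rabs A / e)))). lra. }
    assert (INR (Z.to_nat (up (Rabs A / e))) < INR r) by (apply lt_INR; unfold N in Hr; lia). lra. }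
  eapply Rle_lt_trans; [apply H; unfold N in Hr; lia|].
  apply Rle_lt_trans with (Rabs A / INR r).
  - unfold Rdiv. apply Rmult_le_compat_r; [left; apply Rinv_0_lt_compat; auto| apply Rle_abs].
  - apply Rmult_lt_reg_r with (INR r); auto. unfold Rdiv. rewrite Rmult_assoc, Rinv_l by lra.
    apply Rmult_lt_reg_r with (/ e); [apply Rinv_0_lt_compat; lra|].
    replace (e * INR r * / e) with (INR r) by (field; lra). rewrite Rmult_1_r. exact Hup.
Qed.

Lemma Un_cv_ev (u v : nat -> R) l N0 : (forall r, (N0 <= r)%nat -> u r = v r) -> Un_cv v l -> Un_cv u l.
Proof.
  intros H Hv e He. destruct (Hv e He) as [N HN]. exists (max N N0). intros r Hr.
  rewrite H by lia. apply HN; lia.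
Qed.

Lemma term_bound x : 1 < x -> / (x * sqrt x) <= 2 * (/ sqrt (x - 1) - / sqrt x).
Proof.
  intros Hx.
  set (a := sqrt (x - 1)). set (b := sqrt x).
  assert (Ha : 0 < a) by (apply sqrt_lt_R0; lra).
  assert (Hb : 0 < b) by (apply sqrt_lt_R0; lra).
  assert (Ha2 : a * a = x - 1) by (apply sqrt_sqrt; lra).
  assert (Hb2 : b * b = x) by (apply sqrt_sqrt; lra).
  assert (Hab : a <= b) by (apply sqrt_le_1_alt; lra).
  rewrite <- Hb2.
  replace (2 * (/ a - / b)) with (2 * (b - a) / (a * b)) by (field; lra).
  assert (Hba : b - a = 1 / (a + b)).
  { field_simplify_eq; [| lra]. nra. }
  rewrite Hba.
  apply Rmult_le_reg_r with (b * b * b * (a + b) * a); [repeat apply Rmult_lt_0_compat; lra|].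
  replace (/ (b * b * b) * (b * b * b * (a + b) * a)) with ((a + b) * a) by (field; lra).
  replace (2 * (1 / (a + b)) / (a * b) * (b * b * b * (a + b) * a)) with (2 * b * b) by (field; lra).
  nra.
Qed.

Lemma tele_sum (f : nat -> R) M : sum_f_R0 (fun j => f j - f (S j)) M = f O - f (S M).
Proof. induction M; simpl; [ring|]. rewrite IHM. ring. Qed.

Lemma tail_sum R M : (2 <= R)%nat ->
  sum_f_R0 (fun j => / (INR (R + j) * sqrt (INR (R + j)))) M <= 2 / sqrt (INR (R - 1)).
Proof.
  intros HR.
  set (f := fun j => 2 * / sqrt (INR (R - 1 + j))).
  apply Rle_trans with (sum_f_R0 (fun j => f j - f (S j)) M).
  - apply sum_Rle. intros j _. unfold f.
    replace (INR (R - 1 + S j)) with (INR (R + j)) by (f_equal; lia).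
    replace (INR (R - 1 + j)) with (INR (R + j) - 1) by (replace (R + j)%nat with (S (R - 1 + j)) by lia; rewrite S_INR; ring).
    assert (1 < INR (R + j)) by (apply (lt_INR 1); lia).
    pose proof (term_bound (INR (R + j)) H). lra.
  - rewrite tele_sum. unfold f. rewrite Nat.add_0_r.
    assert (0 <= 2 * / sqrt (INR (R - 1 + S M))).
    { apply Rmult_le_pos; [lra|]. left; apply Rinv_0_lt_compat, sqrt_lt_R0, lt_0_INR; lia. }
    unfold Rdiv. lra.
Qed.

Definition Pw (n q r s1 : nat) : list (list nat * R) :=
  map (fun I => (I, pure_entry n r I s1 q / Wsum n r s1 q)) (combs (n - 1) (seq 1 r)).

Lemma W_pos n q r s1 : (2 <= n)%nat -> (1 <= q <= n)%nat -> (s1 <= r - n)%nat -> (1 <= s1)%nat -> (1 <= r - s1 - n)%nat ->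
  INR s1 ^ (2 * (q - 1)) * INR (r - s1 - n) ^ (2 * (n - q)) <=
    (2 ^ (q - 1) * INR (fact (q - 1)) * (2 ^ (n - q) * INR (fact (n - q)))) * (Wsum n r s1 q / pref n r (s1 + q)).
Proof.
  intros Hn Hq Hp H1 H2.
  rewrite Wsum_formula by lia.
  pose proof (pref_pos n r (s1 + q)).
  pose proof (Esum_lower (q - 1) (s1 + q - 1)) as L1. replace (s1 + q - 1 - (q - 1))%nat with s1 in L1 by lia.
  pose proof (Esum_lower (n - q) (r - (s1 + q))) as L2. replace (r - (s1 + q) - (n - q))%nat with (r - s1 - n)%nat in L2 by lia.
  replace (pref n r (s1 + q) * Esum (q - 1) (s1 + q - 1) * Esum (n - q) (r - (s1 + q)) / pref n r (s1 + q))
    with (Esum (q - 1) (s1 + q - 1) * Esum (n - q) (r - (s1 + q))) by (field; lra).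
  replace (2 ^ (q - 1) * INR (fact (q - 1)) * (2 ^ (n - q) * INR (fact (n - q))) *
    (Esum (q - 1) (s1 + q - 1) * Esum (n - q) (r - (s1 + q))))
    with ((2 ^ (q - 1) * INR (fact (q - 1)) * Esum (q - 1) (s1 + q - 1)) * (2 ^ (n - q) * INR (fact (n - q)) * Esum (n - q) (r - (s1 + q)))) by ring.
  apply Rmult_le_compat; auto; apply pow_le, pos_INR.
Qed.

Lemma Wsum_pos n q r s1 : (2 <= n)%nat -> (1 <= q <= n)%nat -> (s1 <= r - n)%nat -> (1 <= s1)%nat -> (1 <= r - s1 - n)%nat ->
  0 < Wsum n r s1 q.
Proof.
  intros Hn Hq Hp H1 H2. pose proof (W_pos n q r s1 Hn Hq Hp H1 H2) as H.
  pose proof (pref_pos n r (s1 + q)).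
  assert (0 < INR s1 ^ (2 * (q - 1)) * INR (r - s1 - n) ^ (2 * (n - q))).
  { apply Rmult_lt_0_compat; apply pow_lt, lt_0_INR; lia. }
  assert (0 < 2 ^ (q - 1) * INR (fact (q - 1)) * (2 ^ (n - q) * INR (fact (n - q)))).
  { repeat apply Rmult_lt_0_compat; try (apply pow_lt; lra); apply lt_0_INR, lt_O_fact. }
  assert (0 < Wsum n r s1 q / pref n r (s1 + q)).
  { destruct (Rlt_le_dec 0 (Wsum n r s1 q / pref n r (s1 + q))) as [h|h]; auto.
    assert (2 ^ (q - 1) * INR (fact (q - 1)) * (2 ^ (n - q) * INR (fact (n - q))) * (Wsum n r s1 q / pref n r (s1 + q)) <= 0).
    { rewrite <- (Rmult_0_r (2 ^ (q - 1) * INR (fact (q - 1)) * (2 ^ (n - q) * INR (fact (n - q))))). apply Rmult_le_compat_l; lra. } lra. }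
  apply Rmult_lt_reg_r with (/ pref n r (s1 + q)); [apply Rinv_0_lt_compat; lra|]. lra.
Qed.

Lemma sum_Pw n q r s1 : (2 <= n)%nat -> (1 <= q <= n)%nat -> (s1 <= r - n)%nat -> (1 <= s1)%nat -> (1 <= r - s1 - n)%nat ->
  sumR (map snd (Pw n q r s1)) = 1.
Proof.
  intros. pose proof (Wsum_pos n q r s1 H H0 H1 H2 H3). unfold Pw. rewrite map_map. simpl.
  rewrite (sumR_map_ext _ (fun I => / Wsum n r s1 q * pure_entry n r I s1 q)) by (intros; unfold Rdiv; ring).
  rewrite sumR_map_scal. fold (Wsum n r s1 q). field. lra.
Qed.

Lemma ratio_identity n q r s1 x : (2 <= n)%nat -> (1 <= q <= n)%nat -> (s1 <= r - n)%nat -> (1 <= s1)%nat -> (1 <= r - s1 - n)%nat ->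
  kpq n x r s1 q / (C (r - n) s1 * mu n q r s1) =
  hk (q - 1) s1 * hk (n - q) (r - s1 - n) * (1 + 2 * Tx x (Pw n q r s1)).
Proof.
  intros Hn Hq Hp H1 H2.
  pose proof (Wsum_pos n q r s1 Hn Hq Hp H1 H2) as HW.
  assert (HT : Tx x (Pw n q r s1) = kpq n x r s1 q / Wsum n r s1 q - 1/2).
  { unfold Tx, Pw. rewrite map_map. simpl.
    rewrite (sumR_map_ext _ (fun I => / Wsum n r s1 q * (x I * pure_entry n r I s1 q) + (- / (2 * Wsum n r s1 q)) * pure_entry n r I s1 q))
      by (intros; field; lra).
    rewrite sumR_map_plus, !sumR_map_scal. fold (Wsum n r s1 q). unfold kpq. fold (sumR (map (fun I => x I * pure_entry n r I s1 q) (combs (n - 1) (seq 1 r)))).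
    field. lra. }
  rewrite HT.
  assert (HWf := Wsum_formula n r s1 q ltac:(lia) Hq Hp).
  set (s2 := (r - s1 - n)%nat) in *.
  set (k1 := (q - 1)%nat). set (k2 := (n - q)%nat).
  assert (E1 : (s1 + q - 1)%nat = (s1 + k1)%nat) by (unfold k1; lia).
  assert (E2 : (r - (s1 + q))%nat = (s2 + k2)%nat) by (unfold s2, k2; lia).
  assert (E3 : (r - n - s1)%nat = s2) by (unfold s2; lia).
  assert (E4 : (s1 + q - 1)%nat = (s1 + q - 1)%nat) by reflexivity.
  rewrite E1, E2 in HWf.
  unfold pref in HWf. rewrite E1, E2 in HWf.
  unfold C, mu, hk. rewrite E3. fold k1 k2. fold s2.
  assert (Hn2 : 2 ^ n = 2 * 2 ^ k1 * 2 ^ k2).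
  { replace n with (1 + k1 + k2)%nat at 1 by (unfold k1, k2; lia). rewrite !pow_add. simpl. ring. }
  rewrite Hn2.
  set (W := Wsum n r s1 q) in *.
  set (K := kpq n x r s1 q).
  assert (Hs1 : 0 < INR s1) by (apply lt_0_INR; lia).
  assert (Hs2 : 0 < INR s2) by (apply lt_0_INR; unfold s2; lia).
  assert (F : forall m, INR (fact m) <> 0) by (intros; apply not_0_INR, fact_neq_0).
  assert (P1 : INR s1 ^ k1 <> 0) by (apply pow_nonzero; lra).
  assert (P2 : INR s2 ^ k2 <> 0) by (apply pow_nonzero; lra).
  assert (P3 : 2 ^ k1 <> 0) by (apply pow_nonzero; lra).
  assert (P4 : 2 ^ k2 <> 0) by (apply pow_nonzero; lra).
  rewrite HWf in *. change (q - 1)%nat with k1 in HW |- *. change (n - q)%nat with k2 in HW |- *.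
  assert (HE1 : Esum k1 (s1 + k1) <> 0).
  { intros Habs. rewrite Habs in HW. lra. }
  assert (HE2 : Esum k2 (s2 + k2) <> 0).
  { intros Habs. rewrite Habs in HW. lra. }
  field. repeat split; auto.
Qed.

Lemma weight_ratio n q r s1 I : (2 <= n)%nat -> (1 <= q <= n)%nat -> (s1 <= r - n)%nat -> (1 <= s1)%nat -> (1 <= r - s1 - n)%nat ->
  In I (combs (n - 1) (seq 1 r)) ->
  0 <= pure_entry n r I s1 q / Wsum n r s1 q <=
  (2 ^ (q - 1) * INR (fact (q - 1)) * (2 ^ (n - q) * INR (fact (n - q)))) * INR r ^ (n - 1) /
     (INR s1 ^ (2 * (q - 1)) * INR (r - s1 - n) ^ (2 * (n - q))).
Proof.
  intros Hn Hq Hp H1 H2 HI.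
  pose proof (Wsum_pos n q r s1 Hn Hq Hp H1 H2) as HW.
  pose proof (W_pos n q r s1 Hn Hq Hp H1 H2) as HWp.
  pose proof (weight_bounds n r s1 q I ltac:(lia) Hq Hp HI) as [Hw1 Hw2].
  pose proof (pref_pos n r (s1 + q)) as Hpr.
  set (D0 := 2 ^ (q - 1) * INR (fact (q - 1)) * (2 ^ (n - q) * INR (fact (n - q)))) in *.
  set (S := INR s1 ^ (2 * (q - 1)) * INR (r - s1 - n) ^ (2 * (n - q))) in *.
  assert (HS : 0 < S) by (apply Rmult_lt_0_compat; apply pow_lt, lt_0_INR; lia).
  set (w := pure_entry n r I s1 q) in *. set (W := Wsum n r s1 q) in *. set (pr := pref n r (s1 + q)) in *.
  set (Rn := INR r ^ (n - 1)) in *.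
  split; [apply Rmult_le_pos; [lra| left; apply Rinv_0_lt_compat; lra]|].
  apply Rmult_le_reg_r with (W * S); [nra|].
  replace (w / W * (W * S)) with (w * S) by (field; lra).
  replace (D0 * Rn / S * (W * S)) with (D0 * Rn * W) by (field; lra).
  assert (w * S <= pr * Rn * S) by (apply Rmult_le_compat_r; lra).
  assert (pr * Rn * S <= pr * Rn * (D0 * (W / pr))).
  { apply Rmult_le_compat_l; auto. apply Rmult_le_pos; [lra| apply pow_le, pos_INR]. }
  replace (pr * Rn * (D0 * (W / pr))) with (D0 * Rn * W) in H0 by (field; lra).
  lra.
Qed.

Lemma S2_bound (P : list (list nat * R)) M : (forall t, In t P -> 0 <= snd t <= M) ->
  S2 P <= M * sumR (map snd P).
Proof.
  intros H. unfold S2. rewrite <- sumR_map_scal. apply sumR_map_le. intros t Ht.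
  destruct (H t Ht). simpl. nra.
Qed.

Lemma nat_above (y : R) : exists N : nat, y <= INR N.
Proof.
  destruct (archimed y) as [Ha _]. exists (Z.to_nat (up y)).
  destruct (Z_le_gt_dec 0 (up y)).
  - rewrite INR_IZR_INZ, Z2Nat.id by lia. lra.
  - assert (IZR (up y) < 0) by (apply IZR_lt; lia). pose proof (pos_INR (Z.to_nat (up y))). lra.
Qed.

Lemma BK_nonneg k : 0 <= BK k.
Proof.
  unfold BK, aK. pose proof (pos_INR k).
  assert (0 <= 2 * INR k + 1 + INR k * (INR k + 1)) by nra.
  assert (0 <= (1 + (2 * INR k + 1 + INR k * (INR k + 1))) ^ k) by (apply pow_le; lra).
  assert (0 <= INR k ^ 2) by (simpl; nra).
  assert (0 <= INR k * (2 * INR k + 1 + INR k * (INR k + 1))) by nra.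
  nra.
Qed.

Lemma pow4_abs_ge (t e : R) : 0 < e -> e <= Rabs t -> e ^ 4 <= t ^ 4.
Proof.
  intros He Ht. replace (t ^ 4) with (Rabs t ^ 4).
  - apply pow_incr; lra.
  - rewrite RPow_abs. apply Rabs_right. replace (t ^ 4) with ((t ^ 2) ^ 2) by ring. apply Rle_ge, pow2_ge_0.
Qed.

Theorem theorem2p1 (n q : nat) (c : R) (p : nat -> nat)
  (hn : (2 <= n)%nat) (hq : (1 <= q <= n)%nat) (hc : 0 < c < 1/2)
  (hp : forall r : nat, (n <= r)%nat ->
          (p r <= r - n)%nat /\ c <= INR (p r) / INR r <= 1 - c) :
  almost_every n (fun x =>
    Un_cv (fun r => kpq n x r (p r) q
                    / (C (r - n) (p r) * mu n q r (p r))) 1).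
Proof.
  set (beta := c / 2).
  destruct (nat_above ((2 * INR n + 2) / c)) as [N1 HN1].
  set (r0 := (n + 1 + N1)%nat).
  assert (Hgood : forall r, (r0 <= r)%nat ->
    (p r <= r - n)%nat /\ (1 <= p r)%nat /\ (1 <= r - p r - n)%nat /\
    beta * INR r <= INR (p r) /\ beta * INR r <= INR (r - p r - n) /\ 1 <= beta * INR r /\ (1 <= r)%nat).
  { intros r Hr. destruct (hp r ltac:(unfold r0 in Hr; lia)) as [H1 [H2 H3]].
    assert (Hrp : 0 < INR r) by (apply lt_0_INR; unfold r0 in Hr; lia).
    assert (HrN : (2 * INR n + 2) / c <= INR r).
    { eapply Rle_trans; [exact HN1|]. apply le_INR. unfold r0 in Hr; lia. }
    assert (Hcr : 2 * INR n + 2 <= c * INR r).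
    { apply Rmult_le_reg_r with (/ c); [apply Rinv_0_lt_compat; lra|].
      replace (c * INR r * / c) with (INR r) by (field; lra). exact HrN. }
    assert (Hp1 : c * INR r <= INR (p r)).
    { apply Rmult_le_reg_r with (/ INR r); [apply Rinv_0_lt_compat; lra|].
      replace (c * INR r * / INR r) with c by (field; lra). exact H2. }
    assert (Hp2 : INR (p r) <= (1 - c) * INR r).
    { apply Rmult_le_reg_r with (/ INR r); [apply Rinv_0_lt_compat; lra|].
      replace ((1 - c) * INR r * / INR r) with (1 - c) by (field; lra). exact H3. }
    assert (Hs2 : INR (r - p r - n) = INR r - INR (p r) - INR n) by (rewrite !minus_INR by lia; ring).
    pose proof (pos_INR n).
    assert (Hb1 : 1 <= beta * INR r) by (unfold beta; nra).
    assert (Hs2b : beta * INR r <= INR (r - p r - n)) by (rewrite Hs2; unfold beta; nra).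
    assert (Hp1b : beta * INR r <= INR (p r)) by (unfold beta; nra).
    repeat split; auto.
    - destruct (p r) eqn:E; [simpl in Hp1b; lra| lia].
    - destruct (r - p r - n)%nat eqn:E; [simpl in Hs2b; lra| lia].
    - unfold r0 in Hr; lia. }
  set (k1 := (q - 1)%nat). set (k2 := (n - q)%nat).
  set (D0 := 2 ^ k1 * INR (fact k1) * (2 ^ k2 * INR (fact k2))).
  set (K0 := D0 / beta ^ (2 * (n - 1))).
  assert (Hbeta : 0 < beta) by (unfold beta; lra).
  assert (HD0 : 0 < D0).
  { unfold D0. repeat apply Rmult_lt_0_compat; try (apply pow_lt; lra); apply lt_0_INR, lt_O_fact. }
  assert (HK0 : 0 < K0) by (unfold K0; apply Rdiv_lt_0_compat; auto; apply pow_lt; auto).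
  assert (Hw : forall r, (r0 <= r)%nat -> forall t, In t (Pw n q r (p r)) -> 0 <= snd t <= K0 / INR r).
  { intros r Hr t Ht. destruct (Hgood r Hr) as [G1 [G2 [G3 [G4 [G5 [G6 G7]]]]]].
    unfold Pw in Ht. apply in_map_iff in Ht as [I [<- HI]]. simpl.
    pose proof (weight_ratio n q r (p r) I hn hq G1 G2 G3 HI) as [W1 W2]. split; auto.
    eapply Rle_trans; [exact W2|]. fold k1 k2. fold D0.
    set (x := INR r). assert (Hx : 1 <= x) by (unfold x; apply (le_INR 1); auto).
    assert (Hpow : (beta * x) ^ (2 * k1) * (beta * x) ^ (2 * k2) <= INR (p r) ^ (2 * k1) * INR (r - p r - n) ^ (2 * k2)).
    { assert (0 <= beta * x) by nra.
      apply Rmult_le_compat; [apply pow_le; lra| apply pow_le; lra| apply pow_incr; unfold x; lra| apply pow_incr; unfold x; lra]. }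
    rewrite <- pow_add, Rpow_mult_distr in Hpow.
    replace (2 * k1 + 2 * k2)%nat with (2 * (n - 1))%nat in Hpow by (unfold k1, k2; lia).
    assert (Hxp : 0 < x ^ (n - 1)) by (apply pow_lt; lra).
    assert (Hbp : 0 < beta ^ (2 * (n - 1))) by (apply pow_lt; lra).
    assert (Hx2 : x ^ (2 * (n - 1)) = x ^ (n - 1) * x ^ (n - 1)) by (replace (2 * (n - 1))%nat with ((n-1) + (n-1))%nat by lia; apply pow_add).
    assert (Hxn : x <= x ^ (n - 1)).
    { replace (n - 1)%nat with (S (n - 2)) by lia. simpl. rewrite <- (Rmult_1_r x) at 1.
      apply Rmult_le_compat_l; [lra|]. apply pow_R1_Rle; lra. }
    apply Rle_trans with (D0 * x ^ (n - 1) / (beta ^ (2 * (n - 1)) * x ^ (2 * (n - 1)))).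
    - unfold Rdiv. apply Rmult_le_compat_l; [apply Rmult_le_pos; lra|].
      apply Rinv_le_contravar; [apply Rmult_lt_0_compat; [lra| rewrite Hx2; nra]| exact Hpow].
    - rewrite Hx2. unfold K0.
      replace (D0 * x ^ (n - 1) / (beta ^ (2 * (n - 1)) * (x ^ (n - 1) * x ^ (n - 1)))) with (D0 / beta ^ (2 * (n - 1)) / x ^ (n - 1)) by (field; lra).
      unfold Rdiv. apply Rmult_le_compat_l; [apply Rmult_le_pos; [lra| left; apply Rinv_0_lt_compat; lra]|].
      apply Rinv_le_contravar; lra. }
  assert (HS2 : forall r, (r0 <= r)%nat -> S2 (Pw n q r (p r)) <= K0 / INR r).
  { intros r Hr. destruct (Hgood r Hr) as [G1 [G2 [G3 _]]].
    eapply Rle_trans; [apply S2_bound; exact (Hw r Hr)|]. rewrite sum_Pw by auto. lra. }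
  assert (Hconv : forall x R, (r0 <= R)%nat ->
     (forall r, (R <= r)%nat -> Tx x (Pw n q r (p r)) ^ 4 <= / sqrt (INR r)) ->
     Un_cv (fun r => kpq n x r (p r) q / (C (r - n) (p r) * mu n q r (p r))) 1).
  { intros x R HR HT.
    apply (Un_cv_ev _ (fun r => hk k1 (p r) * hk k2 (r - p r - n) * (1 + 2 * Tx x (Pw n q r (p r)))) 1 r0).
    { intros r Hr. destruct (Hgood r Hr) as [G1 [G2 [G3 _]]]. apply ratio_identity; auto. }
    assert (Hlim : Un_cv (fun r => hk k1 (p r) * hk k2 (r - p r - n) * (1 + 2 * Tx x (Pw n q r (p r)))) (1 * 1 * (1 + 2 * 0))).
    2:{ replace (1 * 1 * (1 + 2 * 0)) with 1 in Hlim by ring. exact Hlim. }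
    apply CV_mult; [apply CV_mult|].
    - apply (Un_cv_bound _ _ (BK k1 / beta) r0). intros r Hr.
      destruct (Hgood r Hr) as [G1 [G2 [G3 [G4 [G5 [G6 G7]]]]]].
      eapply Rle_trans; [apply hk_bound; auto|].
      pose proof (BK_nonneg k1). unfold Rdiv. rewrite Rmult_assoc. apply Rmult_le_compat_l; auto.
      rewrite <- Rinv_mult. apply Rinv_le_contravar; [nra|]. lra.
    - apply (Un_cv_bound _ _ (BK k2 / beta) r0). intros r Hr.
      destruct (Hgood r Hr) as [G1 [G2 [G3 [G4 [G5 [G6 G7]]]]]].
      eapply Rle_trans; [apply hk_bound; auto|].
      pose proof (BK_nonneg k2). unfold Rdiv. rewrite Rmult_assoc. apply Rmult_le_compat_l; auto.
      rewrite <- Rinv_mult. apply Rinv_le_contravar; [nra|]. lra.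
    - apply CV_plus; [intros e He; exists O; intros; unfold Rdist; rewrite Rminus_diag, Rabs_R0; lra|].
      apply CV_mult; [intros e He; exists O; intros; unfold Rdist; rewrite Rminus_diag, Rabs_R0; lra|].
      intros e He.
      destruct (nat_above ((/ e ^ 4) ^ 2)) as [N2 HN2].
      exists (R + 1 + N2)%nat. intros r Hr. unfold Rdist. rewrite Rminus_0_r.
      destruct (Rlt_le_dec (Rabs (Tx x (Pw n q r (p r)))) e) as [h|h]; auto. exfalso.
      pose proof (pow4_abs_ge _ _ He h) as H4.
      pose proof (HT r ltac:(lia)) as H5.
      assert (Hr0 : 0 < INR r) by (apply lt_0_INR; lia).
      assert (He4 : 0 < e ^ 4) by (apply pow_lt; lra).
      assert (HrN : (/ e ^ 4) ^ 2 < INR r).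
      { eapply Rle_lt_trans; [exact HN2|]. apply lt_INR; lia. }
      assert (Hsq : / e ^ 4 < sqrt (INR r)).
      { rewrite <- (sqrt_pow2 (/ e ^ 4)) by (left; apply Rinv_0_lt_compat; lra). apply sqrt_lt_1_alt. split; [apply pow2_ge_0| exact HrN]. }
      assert (/ sqrt (INR r) < e ^ 4).
      { rewrite <- (Rinv_inv (e ^ 4)). apply Rinv_lt_contravar; [| exact Hsq].
        apply Rmult_lt_0_compat; [apply Rinv_0_lt_compat; lra| apply sqrt_lt_R0; lra]. }
      lra. }
  unfold almost_every. apply null_from_lists. intros eps Heps.
  destruct (nat_above ((6 * K0 ^ 2 / eps) ^ 2)) as [N3 HN3].
  set (RR := (r0 + 2 + N3)%nat).
  exists (fun j => GPlist (RR + j)%nat (Pw n q (RR + j)%nat (p (RR + j)%nat)) (/ sqrt (INR (RR + j)%nat))).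
  assert (HGP : forall j, let r := (RR + j)%nat in
     Forall (box_wf n) (GPlist r (Pw n q r (p r)) (/ sqrt (INR r))) /\
     sumR (map box_meas (GPlist r (Pw n q r (p r)) (/ sqrt (INR r)))) <= 3 * S2 (Pw n q r (p r)) ^ 2 / / sqrt (INR r) /\
     (forall x, in_Omega n x -> Tx x (Pw n q r (p r)) ^ 4 > / sqrt (INR r) -> exists B, In B (GPlist r (Pw n q r (p r)) (/ sqrt (INR r))) /\ in_box x B)).
  { intros j r. assert (Hr : (r0 <= r)%nat) by (unfold r, RR; lia).
    destruct (Hgood r Hr) as [G1 [G2 [G3 [G4 [G5 [G6 G7]]]]]].
    assert (Hrp : 1 <= INR r) by (apply (le_INR 1); auto).
    assert (Hsq : 0 < sqrt (INR r)) by (apply sqrt_lt_R0; lra).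
    apply GP.
    - auto.
    - apply Rinv_0_lt_compat; auto.
    - assert (sqrt (INR r) <= INR r).
      { rewrite <- (sqrt_pow2 (INR r)) at 2 by lra. apply sqrt_le_1_alt. simpl. nra. }
      assert (INR r <= INR r ^ 4).
      { replace (INR r ^ 4) with (INR r * (INR r * (INR r * INR r))) by ring.
        rewrite <- (Rmult_1_r (INR r)) at 1. apply Rmult_le_compat_l; [lra|]. nra. }
      rewrite pow_inv. unfold Rdiv. rewrite <- Rmult_comm, <- Rinv_mult.
      apply Rinv_le_contravar; [nra|].
      replace ((2 * INR r) ^ 4) with (16 * INR r ^ 4) by ring. lra.
    - unfold Pw. rewrite Forall_forall; intros t Ht. apply in_map_iff in Ht as [I [<- HI]]. simpl.
      apply (combs_valid n r I HI).
    - unfold Pw. rewrite map_map. simpl. rewrite map_id. apply combs_NoDup, seq_NoDup.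
    - rewrite Forall_forall; intros t Ht. apply (Hw r Hr t Ht).
    - rewrite sum_Pw by auto. lra. }
  split; [|split].
  - intros j. apply (HGP j).
  - intros M.
    apply Rle_trans with (sum_f_R0 (fun j => / (INR (RR + j)%nat * sqrt (INR (RR + j)%nat)) * (3 * K0 ^ 2)) M).
    + apply sum_Rle. intros j _. destruct (HGP j) as [_ [Hm _]]. cbv zeta in Hm.
      eapply Rle_trans; [exact Hm|].
      assert (Hr : (r0 <= RR + j)%nat) by (unfold RR; lia).
      pose proof (HS2 _ Hr) as H2. pose proof (S2_nonneg (Pw n q (RR + j)%nat (p (RR + j)%nat))).
      set (x := INR (RR + j)%nat) in *.
      assert (Hx : 1 <= x) by (unfold x; apply (le_INR 1); lia).
      assert (Hsq : 0 < sqrt x) by (apply sqrt_lt_R0; lra).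
      assert (Hsx : sqrt x * sqrt x = x) by (apply sqrt_sqrt; lra).
      assert (S2 (Pw n q (RR + j)%nat (p (RR + j)%nat)) ^ 2 <= (K0 / x) ^ 2) by (apply pow_incr; lra).
      replace (3 * S2 (Pw n q (RR + j)%nat (p (RR + j)%nat)) ^ 2 / / sqrt x) with (3 * sqrt x * S2 (Pw n q (RR + j)%nat (p (RR + j)%nat)) ^ 2) by (field; lra).
      replace (/ (x * sqrt x) * (3 * K0 ^ 2)) with (3 * sqrt x * (K0 / x) ^ 2).
      * apply Rmult_le_compat_l; [lra| auto].
      * clear -Hsq Hsx Hx. set (s := sqrt x) in *. clearbody s x. subst x. field. lra.
    + rewrite <- scal_sum.
      assert (HR2 : (2 <= RR)%nat) by (unfold RR; lia).
      pose proof (tail_sum RR M HR2) as Ht.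
      assert (Hsq : 6 * K0 ^ 2 / eps <= sqrt (INR (RR - 1))).
      { rewrite <- (sqrt_pow2 (6 * K0 ^ 2 / eps)).
        - apply sqrt_le_1_alt. eapply Rle_trans; [exact HN3|]. apply le_INR. unfold RR; lia.
        - apply Rmult_le_pos; [nra| left; apply Rinv_0_lt_compat; lra]. }
      assert (Hpos : 0 < 6 * K0 ^ 2 / eps) by (apply Rdiv_lt_0_compat; [nra| lra]).
      assert (H2 : 2 / sqrt (INR (RR - 1)) <= 2 / (6 * K0 ^ 2 / eps)).
      { unfold Rdiv. apply Rmult_le_compat_l; [lra|]. apply Rinv_le_contravar; auto. }
      assert (H3 : 3 * K0 ^ 2 * (2 / (6 * K0 ^ 2 / eps)) = eps) by (field; split; lra).
      assert (0 <= 3 * K0 ^ 2) by nra.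
      assert (3 * K0 ^ 2 * sum_f_R0 (fun j => / (INR (RR + j)%nat * sqrt (INR (RR + j)%nat))) M <= 3 * K0 ^ 2 * (2 / sqrt (INR (RR - 1)))).
      { apply Rmult_le_compat_l; auto. }
      assert (3 * K0 ^ 2 * (2 / sqrt (INR (RR - 1))) <= 3 * K0 ^ 2 * (2 / (6 * K0 ^ 2 / eps))).
      { apply Rmult_le_compat_l; auto. }
      rewrite Rmult_comm. lra.
  - intros x Hx Hnc.
    assert (Hex : exists r, (RR <= r)%nat /\ Tx x (Pw n q r (p r)) ^ 4 > / sqrt (INR r)).
    { apply NNPP. intros Hne. apply Hnc. apply (Hconv x RR); [unfold RR; lia|].
      intros r Hr. apply Rnot_gt_le. intros Hg. apply Hne. exists r; auto. }
    destruct Hex as [r [Hr HT]].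
    destruct (HGP (r - RR)%nat) as [_ [_ Hc]]. cbv zeta in Hc.
    replace (RR + (r - RR))%nat with r in Hc by lia.
    destruct (Hc x Hx HT) as [B [HB1 HB2]].
    exists (r - RR)%nat, B. replace (RR + (r - RR))%nat with r by lia. auto.
Qed.
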